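(* Let $s\ge1$ and suppose Assumptions 1, 2 and 3 hold with the same constant $0\le\delta_s<1$. Then there exists a constant $C_U>0$ depending only on $a_u$ and $a_\ell$ such that $$\inf_{\hat f}\ \sup_{f^*\in\mathcal{F}_{T,s,D}}\mathbb{E}\big[\|\hat f-f^*\|_2^2\big]\ \le\ C_U\min\left(\frac{s\log_2 p}{(1-\delta_s)T}+\frac{s\log_2(T+1)}{(1-\delta_s)T},\ s\max_{j,k}|D_{j,k}|^2,\ 1\right),$$ where the infimum is over all measurable estimators $\hat f$ of $f^*$ based on $y$ (which may depend on $T$, $A$, $D$).
   Context: Setup: $n,p\ge1$ integers, $T>0$. $D\in\mathbb{R}^{p\times p}$ is an orthonormal matrix with columns $d_1,\dots,d_p$, where $d_1=p^{-1/2}(1,\dots,1)^\top$; $\bar D=[d_2,\dots,d_p]\in\mathbb{R}^{p\times(p-1)}$. For an integer $s\ge1$, $\mathcal{F}_{T,s,D}=\{f\in\mathbb{R}^p_{\ge0}:\ \|f\|_1=1,\ \|\bar D^\top f\|_0\le s\}$, where $\|v\|_0$ is the number of nonzero entries. Given a sensing matrix $A\in\mathbb{R}^{n\times p}$ and $f^*\in\mathcal{F}_{T,s,D}$, the observation is $y=(y_1,\dots,y_n)$ with independent $y_i\sim\mathrm{Poisson}(T(Af^* )_i)$; expectation is over $y$. Assumption 1: there are constants $a_\ell<a_u$ and a matrix $\widetilde A\in\mathbb{R}^{n\times p}$ with all entries in $[a_\ell/\sqrt n,a_u/\sqrt n]$ such that $A=\big(\widetilde A+\frac{a_u-2a_\ell}{\sqrt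 n}\mathbb{1}_{n\times p}\big)/\big(2(a_u-a_\ell)\sqrt n\big)$, with $\mathbb{1}_{n\times p}$ the all-ones matrix. Assumption 2: there is $\delta_s\ge0$ such that $\|\widetilde A D u\|_2^2\le(1+\delta_s)\|u\|_2^2$ for all $u\in\mathbb{R}^p$ with $\|u\|_0\le 2s$. Assumption 3: with the same $\delta_s$, $\|\widetilde A D u\|_2^2\ge(1-\delta_s)\|u\|_2^2$ for all $u\in\mathbb{R}^p$ with $\|u\|_0\le 2s$. *)

(* Defs.v *)
From Stdlib Require Import Reals List Arith.
Import ListNotations.
Open Scope R_scope.

Definition rsum (n : nat) (F : nat -> R) : R :=
  fold_right Rplus 0 (map F (seq 0 n)).

Definition rprod (n : nat) (F : nat -> R) : R :=
  fold_right Rmult 1 (map F (seq 0 n)).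

Definition count_nz (lo len : nat) (v : nat -> R) : nat :=
  length (filter (fun i => if Req_EM_T (v i) 0 then false else true) (seq lo len)).

Definition l0 (p : nat) (u : nat -> R) : nat := count_nz 0 p u.

Definition sqnorm (p : nat) (u : nat -> R) : R := rsum p (fun j => (u j)^2).

Definition matvec (m : nat) (M : nat -> nat -> R) (v : nat -> R) : nat -> R :=
  fun i => rsum m (fun j => M i j * v j).

Definition orthonormal (p : nat) (D : nat -> nat -> R) : Prop :=
  forall i j, (i < p)%nat -> (j < p)%nat ->
    rsum p (fun k => D k i * D k j) = if Nat.eqb i j then 1 else 0.

Definition first_col_const (p : nat) (D : nat -> nat -> R) : Prop :=
  forall k, (k < p)%nat -> D k 0%nat = / sqrt (INR p).

(* ||Dbar^T f||_0 where Dbar = [d_2,...,d_p]: count of j in {1..p-1}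
   with <d_j, f> <> 0 *)
Definition Dbar_l0 (p : nat) (D : nat -> nat -> R) (f : nat -> R) : nat :=
  count_nz 1 (p - 1) (fun j => rsum p (fun k => D k j * f k)).

Definition in_F (p s : nat) (D : nat -> nat -> R) (f : nat -> R) : Prop :=
  (forall j, (j < p)%nat -> 0 <= f j) /\
  rsum p f = 1 /\
  (Dbar_l0 p D f <= s)%nat.

Definition max_abs2 (p : nat) (D : nat -> nat -> R) : R :=
  fold_right Rmax 0
    (flat_map (fun j => map (fun k => (Rabs (D j k))^2) (seq 0 p)) (seq 0 p)).

Definition log2 (x : R) : R := ln x / ln 2.

Definition poisson_pmf (lam : R) (k : nat) : R :=
  exp (- lam) * lam ^ k / INR (fact k).

Fixpoint box (n N : nat) : list (list nat) :=
  match n with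
  | O => [ [] ]
  | S m => flat_map (fun k => map (cons k) (box m N)) (seq 0 (S N))
  end.

Definition joint_pmf (lam : nat -> R) (y : list nat) : R :=
  rprod (length y) (fun i => poisson_pmf (lam i) (nth i y 0%nat)).

Definition box_expect (n N : nat) (lam : nat -> R) (g : list nat -> R) : R :=
  fold_right Rplus 0 (map (fun y => joint_pmf lam y * g y) (box n N)).

(* E[g(y)] <= B for a NONNEGATIVE g, y_i ~ Poisson(lam i) independent, i < n.
   By monotone convergence E[g(y)] = sup_N box_expect n N lam g, so
   E[g(y)] <= B iff every truncated sum is <= B. *)
Definition expect_le (n : nat) (lam : nat -> R) (g : list nat -> R) (B : R) : Prop :=
  forall N : nat, box_expect n N lam g <= B.

(* Main.v *)
Require Import Defs.
From Stdlib Require Import Reals List Arith Lra Lia.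
Import ListNotations.
Open Scope R_scope.
From Stdlib Require Import ClassicalEpsilon FunctionalExtensionality ZArith.
Import ListNotations.
Open Scope R_scope.

Lemma rsum_0 : forall F, rsum 0 F = 0.
Proof. reflexivity. Qed.

Lemma rsum_S_r : forall n F, rsum (S n) F = rsum n F + F n.
Proof.
  intros n F. unfold rsum. rewrite seq_S, map_app, fold_right_app. simpl.
  generalize (map F (seq 0 n)). induction l; simpl; lra.
Qed.

Lemma rsum_S : forall n F, rsum (S n) F = F 0%nat + rsum n (fun i => F (S i)).
Proof.
  intros n F. unfold rsum. simpl. f_equal. rewrite <- seq_shift, map_map. reflexivity.
Qed.

Lemma rsum_ext : forall n F G, (forall i, (i < n)%nat -> F i = G i) -> rsum n F = rsum n G.
Proof.
  induction n; intros F G H. reflexivity.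
  rewrite !rsum_S_r. rewrite (IHn F G) by (intros; apply H; lia). rewrite H by lia. reflexivity.
Qed.

Lemma rsum_le : forall n F G, (forall i, (i < n)%nat -> F i <= G i) -> rsum n F <= rsum n G.
Proof.
  induction n; intros F G H. rewrite !rsum_0; lra.
  rewrite !rsum_S_r. assert (rsum n F <= rsum n G) by (apply IHn; intros; apply H; lia).
  assert (F n <= G n) by (apply H; lia). lra.
Qed.

Lemma rsum_plus : forall n F G, rsum n (fun i => F i + G i) = rsum n F + rsum n G.
Proof. induction n; intros. rewrite !rsum_0; lra. rewrite !rsum_S_r, IHn. lra. Qed.

Lemma rsum_minus : forall n F G, rsum n (fun i => F i - G i) = rsum n F - rsum n G.
Proof. induction n; intros. rewrite !rsum_0; lra. rewrite !rsum_S_r, IHn. lra. Qed.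

Lemma rsum_scal : forall n c F, rsum n (fun i => c * F i) = c * rsum n F.
Proof. induction n; intros. rewrite !rsum_0; lra. rewrite !rsum_S_r, IHn. lra. Qed.

Lemma rsum_zero : forall n, rsum n (fun _ => 0) = 0.
Proof. induction n. reflexivity. rewrite rsum_S_r, IHn; lra. Qed.

Lemma rsum_const : forall n c, rsum n (fun _ => c) = INR n * c.
Proof. induction n; intros. rewrite rsum_0; simpl; lra. rewrite rsum_S_r, IHn, S_INR; lra. Qed.

Lemma rsum_nonneg : forall n F, (forall i, (i < n)%nat -> 0 <= F i) -> 0 <= rsum n F.
Proof.
  intros. rewrite <- (rsum_zero n). apply rsum_le. auto.
Qed.

Lemma rsum_abs : forall n F, Rabs (rsum n F) <= rsum n (fun i => Rabs (F i)).
Proof.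
  induction n; intros. rewrite !rsum_0, Rabs_R0; lra.
  rewrite !rsum_S_r. eapply Rle_trans. apply Rabs_triang. specialize (IHn F). lra.
Qed.

Lemma rsum_swap : forall n m (F : nat -> nat -> R),
  rsum n (fun i => rsum m (fun j => F i j)) = rsum m (fun j => rsum n (fun i => F i j)).
Proof.
  induction n; intros. rewrite rsum_0. symmetry. apply rsum_zero.
  rewrite rsum_S_r, IHn. rewrite <- rsum_plus. apply rsum_ext. intros. rewrite rsum_S_r. reflexivity.
Qed.

Lemma rsum_term_le : forall n F j, (forall i, (i < n)%nat -> 0 <= F i) -> (j < n)%nat -> F j <= rsum n F.
Proof.
  induction n; intros F j H Hj. lia.
  rewrite rsum_S_r. destruct (Nat.eq_dec j n).
  - subst. assert (0 <= rsum n F) by (apply rsum_nonneg; intros; apply H; lia). lra.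
  - assert (F j <= rsum n F) by (apply IHn; [intros; apply H; lia | lia]).
    assert (0 <= F n) by (apply H; lia). lra.
Qed.

Lemma rsum_delta : forall n F j, (j < n)%nat ->
  rsum n (fun i => F i * (if Nat.eqb j i then 1 else 0)) = F j.
Proof.
  induction n; intros F j Hj. lia.
  rewrite rsum_S_r. destruct (Nat.eq_dec j n).
  - subst. rewrite Nat.eqb_refl.
    rewrite (rsum_ext n _ (fun _ => 0)). rewrite rsum_zero. lra.
    intros. destruct (Nat.eqb_spec n i). lia. lra.
  - rewrite IHn by lia. destruct (Nat.eqb_spec j n). lia. lra.
Qed.

Lemma rsum_delta' : forall n F j, (j < n)%nat ->
  rsum n (fun i => F i * (if Nat.eqb i j then 1 else 0)) = F j.
Proof.
  intros. rewrite <- (rsum_delta n F j H). apply rsum_ext. intros.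
  rewrite Nat.eqb_sym. reflexivity.
Qed.

Lemma rsum_mult : forall n m F G,
  rsum n F * rsum m G = rsum n (fun i => rsum m (fun j => F i * G j)).
Proof.
  intros. rewrite Rmult_comm. rewrite <- rsum_scal. apply rsum_ext. intros.
  rewrite Rmult_comm. rewrite <- rsum_scal. reflexivity.
Qed.

Lemma rprod_0 : forall F, rprod 0 F = 1.
Proof. reflexivity. Qed.

Lemma rprod_S_r : forall n F, rprod (S n) F = rprod n F * F n.
Proof.
  intros n F. unfold rprod. rewrite seq_S, map_app, fold_right_app. simpl.
  generalize (map F (seq 0 n)). induction l; simpl. ring. rewrite IHl; ring.
Qed.

Lemma rprod_S : forall n F, rprod (S n) F = F 0%nat * rprod n (fun i => F (S i)).
Proof.
  intros n F. unfold rprod. simpl. f_equal. rewrite <- seq_shift, map_map. reflexivity.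
Qed.

Lemma rprod_ext : forall n F G, (forall i, (i < n)%nat -> F i = G i) -> rprod n F = rprod n G.
Proof.
  induction n; intros F G H. reflexivity.
  rewrite !rprod_S_r. rewrite (IHn F G) by (intros; apply H; lia). rewrite H by lia. reflexivity.
Qed.

Lemma rprod_nonneg : forall n F, (forall i, (i < n)%nat -> 0 <= F i) -> 0 <= rprod n F.
Proof.
  induction n; intros. rewrite rprod_0; lra. rewrite rprod_S_r.
  apply Rmult_le_pos. apply IHn; intros; apply H; lia. apply H; lia.
Qed.

Lemma rprod_pos : forall n F, (forall i, (i < n)%nat -> 0 < F i) -> 0 < rprod n F.
Proof.
  induction n; intros. rewrite rprod_0; lra. rewrite rprod_S_r.
  apply Rmult_lt_0_compat. apply IHn; intros; apply H; lia. apply H; lia.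
Qed.

Lemma rprod_le : forall n F G, (forall i, (i < n)%nat -> 0 <= F i <= G i) -> rprod n F <= rprod n G.
Proof.
  induction n; intros F G H. rewrite !rprod_0; lra.
  rewrite !rprod_S_r. apply Rmult_le_compat.
  apply rprod_nonneg; intros; apply H; lia. apply H; lia.
  apply IHn; intros; apply H; lia. apply H; lia.
Qed.

Lemma rprod_mult : forall n F G, rprod n (fun i => F i * G i) = rprod n F * rprod n G.
Proof. induction n; intros. rewrite !rprod_0; lra. rewrite !rprod_S_r, IHn. lra. Qed.

Lemma rprod_exp : forall n a, rprod n (fun i => exp (a i)) = exp (rsum n a).
Proof.
  induction n; intros. rewrite rprod_0, rsum_0, exp_0; lra.
  rewrite rprod_S_r, rsum_S_r, IHn, exp_plus. reflexivity.
Qed.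
Module MC.
From mathcomp Require Import all_boot all_algebra.
From mathcomp Require Import Rstruct.
Import GRing.Theory.
Local Open Scope ring_scope.

Lemma big_rsum (p : nat) (F : nat -> R) : (\sum_(j < p) F (nat_of_ord j))%R = rsum p F.
Proof.
  elim: p => [|p IH]. by rewrite big_ord0.
  by rewrite big_ord_recr /= IH rsum_S_r.
Qed.

Lemma DDt (p : nat) (D : nat -> nat -> R) :
  (forall i j, (i < p)%N -> (j < p)%N -> rsum p (fun k => D k i * D k j)%R = if Nat.eqb i j then 1%R else 0%R) ->
  forall i k, (i < p)%N -> (k < p)%N -> rsum p (fun j => D i j * D k j)%R = if Nat.eqb i k then 1%R else 0%R.
Proof.
  move=> H i k ip kp.
  pose M : 'M[R]_p := \matrix_(i0, j0) D i0 j0.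
  have H1 : (M^T *m M = 1%:M)%R.
    apply/matrixP => a b. rewrite !mxE.
    rewrite (eq_bigr (fun j : 'I_p => D (nat_of_ord j) a * D (nat_of_ord j) b)%R); last first.
      by move=> j _; rewrite !mxE.
    rewrite (big_rsum p (fun j => D j a * D j b)) H //.
    case: (eqVneq a b) => [->|nab]. by rewrite Nat.eqb_refl.
    have : (nat_of_ord a <> nat_of_ord b). by move=> e; move/eqP: nab; apply; apply: val_inj.
    by move/Nat.eqb_neq => ->.
  have H2 := mulmx1C H1.
  have := congr1 (fun X : 'M[R]_p => X (Ordinal ip) (Ordinal kp)) H2.
  rewrite /= !mxE.
  rewrite (eq_bigr (fun j : 'I_p => D i (nat_of_ord j) * D k (nat_of_ord j))%R); last first.
    by move=> j _; rewrite !mxE.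
  rewrite (big_rsum p (fun j => D i j * D k j)) => ->.
  case: (Nat.eqb_spec i k) => [e|ne].
    subst. have -> : (Ordinal ip == Ordinal kp) by apply/eqP; apply: val_inj.
    by [].
  have -> : (Ordinal ip == Ordinal kp) = false.
    apply/negbTE/eqP => e; apply: ne. exact: (congr1 val e).
  by [].
Qed.
End MC.

Lemma DDt : forall p D, orthonormal p D -> forall i k, (i < p)%nat -> (k < p)%nat ->
  rsum p (fun j => D i j * D k j) = if Nat.eqb i k then 1 else 0.
Proof.
  intros p D HD i k Hi Hk. apply MC.DDt.
  - intros a b Ha Hb. apply HD. exact (ssrbool.elimT ssrnat.ltP Ha). exact (ssrbool.elimT ssrnat.ltP Hb).
  - exact (ssrbool.introT ssrnat.ltP Hi).
  - exact (ssrbool.introT ssrnat.ltP Hk).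
Qed.

Lemma sq_rsum : forall n F, (rsum n F)^2 = rsum n (fun i => rsum n (fun j => F i * F j)).
Proof. intros. rewrite <- rsum_mult. simpl. ring. Qed.

Lemma D_iso : forall p D, orthonormal p D -> forall v, sqnorm p (matvec p D v) = sqnorm p v.
Proof.
  intros p D HD v. unfold sqnorm, matvec.
  rewrite (rsum_ext p _ (fun k => rsum p (fun j => rsum p (fun j' => (D k j * v j) * (D k j' * v j'))))).
  2:{ intros. apply sq_rsum. }
  rewrite rsum_swap.
  rewrite (rsum_ext p _ (fun j => rsum p (fun j' => (v j * v j') * (if Nat.eqb j j' then 1 else 0)))).
  - apply rsum_ext. intros j Hj. rewrite rsum_delta by auto. simpl. ring.
  - intros j Hj. rewrite rsum_swap. apply rsum_ext. intros j' Hj'.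
    rewrite <- HD by auto. rewrite <- rsum_scal. apply rsum_ext. intros. ring.
Qed.

Lemma D_recon : forall p D, orthonormal p D -> forall f i, (i < p)%nat ->
  matvec p D (fun j => rsum p (fun k => D k j * f k)) i = f i.
Proof.
  intros p D HD f i Hi. unfold matvec.
  rewrite (rsum_ext p _ (fun j => rsum p (fun k => D i j * (D k j * f k)))).
  2:{ intros. rewrite <- rsum_scal. reflexivity. }
  rewrite rsum_swap.
  rewrite (rsum_ext p _ (fun k => f k * (if Nat.eqb i k then 1 else 0))).
  apply rsum_delta; auto.
  intros k Hk. rewrite <- (DDt p D HD i k Hi Hk). rewrite <- rsum_scal.
  apply rsum_ext. intros. ring.
Qed.

Lemma matvec_minus : forall m M u v i,
  matvec m M (fun j => u j - v j) i = matvec m M u i - matvec m M v i.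
Proof.
  intros. unfold matvec. rewrite <- rsum_minus. apply rsum_ext. intros. ring.
Qed.

Lemma sum_Dv : forall p D, orthonormal p D -> first_col_const p D -> (1 <= p)%nat ->
  forall v, rsum p (fun k => matvec p D v k) = sqrt (INR p) * v 0%nat.
Proof.
  intros p D HD H0 Hp v. unfold matvec. rewrite rsum_swap.
  assert (Hs : 0 < sqrt (INR p)). { apply sqrt_lt_R0. apply lt_0_INR. lia. }
  rewrite (rsum_ext p _ (fun j => (sqrt (INR p) * v j) * (if Nat.eqb 0 j then 1 else 0))).
  - rewrite rsum_delta by lia. reflexivity.
  - intros j Hj. rewrite <- HD by lia.
    rewrite <- rsum_scal. apply rsum_ext. intros k Hk. rewrite H0 by auto.
    field. lra.
Qed.

Lemma Rabs_le_between : forall x y, Rabs x <= y -> - y <= x <= y.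
Proof. intros. pose proof (Rle_abs x). pose proof (Rle_abs (- x)). rewrite Rabs_Ropp in H1. lra. Qed.

Definition l1 (p : nat) (x : nat -> R) : R := rsum p (fun j => Rabs (x j)).

Lemma l1_nonneg : forall p x, 0 <= l1 p x.
Proof. intros. apply rsum_nonneg. intros. apply Rabs_pos. Qed.

Lemma sqnorm_nonneg : forall p x, 0 <= sqnorm p x.
Proof. intros. apply rsum_nonneg. intros. apply pow2_ge_0. Qed.

Lemma sqnorm_le_l1 : forall p x, sqnorm p x <= (l1 p x)^2.
Proof.
  unfold sqnorm, l1. induction p; intros. rewrite !rsum_0; simpl; lra.
  rewrite !rsum_S_r. specialize (IHp x).
  assert (0 <= rsum p (fun j => Rabs (x j))) by (apply rsum_nonneg; intros; apply Rabs_pos).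
  assert (x p ^ 2 = Rabs (x p) ^2) by (rewrite pow2_abs; reflexivity).
  assert (0 <= Rabs (x p)) by apply Rabs_pos. nra.
Qed.

Lemma sqnorm_tri2 : forall p a b c,
  sqnorm p (fun j => a j - c j) <= 2 * sqnorm p (fun j => a j - b j) + 2 * sqnorm p (fun j => b j - c j).
Proof.
  intros. unfold sqnorm. rewrite <- !rsum_scal, <- rsum_plus. apply rsum_le. intros.
  assert (0 <= ((a i - b i) - (b i - c i))^2) by apply pow2_ge_0. simpl in *. nra.
Qed.

Lemma l1_tri : forall p a b c,
  l1 p (fun j => a j - c j) <= l1 p (fun j => a j - b j) + l1 p (fun j => b j - c j).
Proof.
  intros. unfold l1. rewrite <- rsum_plus. apply rsum_le. intros.
  replace (a i - c i) with ((a i - b i) + (b i - c i)) by ring. apply Rabs_triang.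
Qed.

Lemma count_nz_S : forall lo len x, count_nz lo (S len) x =
  ((if Req_EM_T (x lo) 0 then 0 else 1) + count_nz (S lo) len x)%nat.
Proof.
  intros. unfold count_nz. simpl. destruct (Req_EM_T (x lo) 0); reflexivity.
Qed.

Lemma seq_sum_count : forall len lo F x B,
  (forall i, (lo <= i < lo + len)%nat -> 0 <= F i <= B) ->
  (forall i, (lo <= i < lo + len)%nat -> x i = 0 -> F i = 0) ->
  fold_right Rplus 0 (map F (seq lo len)) <= INR (count_nz lo len x) * B.
Proof.
  induction len; intros lo F x B H1 H2. simpl. unfold count_nz. simpl. lra.
  rewrite count_nz_S. simpl seq. simpl map. simpl fold_right.
  assert (IH := IHlen (S lo) F x B ltac:(intros; apply H1; lia) ltac:(intros ? ? ?; apply H2; [lia|auto])).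
  rewrite plus_INR. destruct (Req_EM_T (x lo) 0).
  - rewrite H2 by (auto; lia). simpl. lra.
  - assert (0 <= F lo <= B) by (apply H1; lia). simpl. lra.
Qed.

Lemma l0_bound : forall p v (L : list nat),
  (forall i, (i < p)%nat -> v i <> 0 -> In i L) -> (l0 p v <= length L)%nat.
Proof.
  intros p v L H. unfold l0, count_nz. apply NoDup_incl_length.
  apply NoDup_filter, seq_NoDup.
  intros i Hi. apply filter_In in Hi. destruct Hi as [Hi1 Hi2].
  apply in_seq in Hi1. apply H. lia. destruct (Req_EM_T (v i) 0); congruence.
Qed.

Section Amat.
Variables (a_l a_u : R) (n p : nat) (At A : nat -> nat -> R).
Hypothesis Hal : a_l < a_u.
Hypothesis Hn : (1 <= n)%nat.
Hypothesis HAt : forall i j, (i < n)%nat -> (j < p)%nat ->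
        a_l / sqrt (INR n) <= At i j <= a_u / sqrt (INR n).
Hypothesis HA : forall i j, (i < n)%nat -> (j < p)%nat ->
        A i j = (At i j + (a_u - 2 * a_l) / sqrt (INR n))
                / (2 * (a_u - a_l) * sqrt (INR n)).

Lemma INRn_pos : 0 < INR n.
Proof. apply lt_0_INR. lia. Qed.

Lemma A_bounds : forall i j, (i < n)%nat -> (j < p)%nat -> / (2 * INR n) <= A i j <= / INR n.
Proof.
  intros i j Hi Hj. pose proof INRn_pos as Hn0.
  set (sn := sqrt (INR n)).
  assert (Hsn : 0 < sn) by (apply sqrt_lt_R0; auto).
  assert (Hss : sn * sn = INR n) by (apply sqrt_sqrt; lra).
  set (t := At i j * sn).
  assert (Ht : a_l <= t <= a_u).
  { destruct (HAt i j Hi Hj) as [h1 h2]. fold sn in h1, h2. unfold t. split.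
    - apply (Rmult_le_compat_r sn) in h1; [|lra]. replace (a_l / sn * sn) with a_l in h1 by (field; lra). lra.
    - apply (Rmult_le_compat_r sn) in h2; [|lra]. replace (a_u / sn * sn) with a_u in h2 by (field; lra). lra. }
  assert (E : A i j = (t + a_u - 2 * a_l) / (2 * (a_u - a_l)) * / INR n).
  { rewrite HA by auto. fold sn. rewrite <- Hss. unfold t. field. split; lra. }
  rewrite E.
  assert (X1 : / 2 <= (t + a_u - 2 * a_l) / (2 * (a_u - a_l))).
  { apply (Rmult_le_reg_r (2 * (a_u - a_l))). lra. unfold Rdiv. rewrite Rmult_assoc, Rinv_l by lra. lra. }
  assert (X2 : (t + a_u - 2 * a_l) / (2 * (a_u - a_l)) <= 1).
  { apply (Rmult_le_reg_r (2 * (a_u - a_l))). lra. unfold Rdiv. rewrite Rmult_assoc, Rinv_l by lra. lra. }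
  assert (0 < / INR n) by (apply Rinv_0_lt_compat; auto).
  rewrite Rinv_mult. split; nra.
Qed.

Lemma A_nonneg : forall i j, (i < n)%nat -> (j < p)%nat -> 0 <= A i j.
Proof.
  intros. pose proof (A_bounds i j H H0). pose proof INRn_pos.
  assert (0 < / (2 * INR n)) by (apply Rinv_0_lt_compat; lra). lra.
Qed.

Lemma A_diff : forall x i, (i < n)%nat -> rsum p x = 0 ->
  matvec p A x i = matvec p At x i / (2 * (a_u - a_l) * sqrt (INR n)).
Proof.
  intros x i Hi Hx. pose proof INRn_pos.
  assert (Hsn : 0 < sqrt (INR n)) by (apply sqrt_lt_R0; auto).
  unfold matvec.
  rewrite (rsum_ext p _ (fun j => / (2 * (a_u - a_l) * sqrt (INR n)) * (At i j * x j)
       + ((a_u - 2 * a_l) / sqrt (INR n) / (2 * (a_u - a_l) * sqrt (INR n))) * x j)).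
  - rewrite rsum_plus, !rsum_scal, Hx. field. split; lra.
  - intros j Hj. rewrite HA by auto. field. split; lra.
Qed.

Lemma A_row_bounds : forall (g : nat -> R) i, (i < n)%nat ->
  (forall j, (j < p)%nat -> 0 <= g j) -> rsum p g = 1 ->
  / (2 * INR n) <= matvec p A g i <= / INR n.
Proof.
  intros g i Hi Hg Hs. unfold matvec. split.
  - replace (/ (2 * INR n)) with (rsum p (fun j => / (2 * INR n) * g j)).
    + apply rsum_le. intros j Hj. apply Rmult_le_compat_r. auto. apply A_bounds; auto.
    + rewrite rsum_scal, Hs. ring.
  - replace (/ INR n) with (rsum p (fun j => / INR n * g j)).
    + apply rsum_le. intros j Hj. apply Rmult_le_compat_r. auto. apply A_bounds; auto.
    + rewrite rsum_scal, Hs. ring.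
Qed.

Lemma A_abs_row : forall y i, (i < n)%nat -> Rabs (matvec p A y i) <= / INR n * l1 p y.
Proof.
  intros y i Hi. unfold matvec, l1. eapply Rle_trans. apply rsum_abs.
  rewrite <- rsum_scal. apply rsum_le. intros j Hj. rewrite Rabs_mult.
  apply Rmult_le_compat_r. apply Rabs_pos.
  pose proof (A_bounds i j Hi Hj). pose proof INRn_pos.
  assert (0 < / (2 * INR n)) by (apply Rinv_0_lt_compat; lra).
  rewrite Rabs_right by lra. lra.
Qed.

Lemma A_l1 : forall y, rsum n (fun i => Rabs (matvec p A y i)) <= l1 p y.
Proof.
  intros y. unfold matvec, l1.
  apply Rle_trans with (rsum n (fun i => rsum p (fun j => A i j * Rabs (y j)))).
  - apply rsum_le. intros i Hi. eapply Rle_trans. apply rsum_abs. apply rsum_le.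
    intros j Hj. rewrite Rabs_mult. rewrite (Rabs_right (A i j)). lra.
    apply Rle_ge, A_nonneg; auto.
  - rewrite rsum_swap. apply rsum_le. intros j Hj.
    rewrite (rsum_ext n _ (fun i => Rabs (y j) * A i j)) by (intros; ring).
    rewrite rsum_scal.
    assert (rsum n (fun i => A i j) <= 1).
    { apply Rle_trans with (rsum n (fun _ => / INR n)).
      apply rsum_le. intros. apply A_bounds; auto.
      rewrite rsum_const. pose proof INRn_pos. right. field. lra. }
    pose proof (Rabs_pos (y j)). nra.
Qed.

Lemma A_intensity : forall (x f' : nat -> R) i, (i < n)%nat ->
  (forall j, (j < p)%nat -> 0 <= f' j) -> rsum p f' = 1 ->
  l1 p (fun j => x j - f' j) <= / 4 ->
  / (4 * INR n) <= matvec p A x i <= 5 / (4 * INR n).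
Proof.
  intros x f' i Hi Hf1 Hf2 Hl.
  pose proof (A_row_bounds f' i Hi Hf1 Hf2).
  pose proof (A_abs_row (fun j => x j - f' j) i Hi).
  rewrite matvec_minus in H0.
  pose proof INRn_pos.
  assert (0 < / INR n) by (apply Rinv_0_lt_compat; lra).
  assert (/ INR n * l1 p (fun j => x j - f' j) <= / INR n * / 4) by (apply Rmult_le_compat_l; lra).
  set (v := matvec p A x i - matvec p A f' i) in *.
  pose proof (Rle_abs v). pose proof (Rle_abs (- v)). rewrite Rabs_Ropp in H5.
  replace (/ (4 * INR n)) with (/ INR n * / 4) by (field; lra).
  replace (5 / (4 * INR n)) with (/ INR n * / 4 * 5) by (field; lra).
  replace (/ (2 * INR n)) with (/ INR n * / 2) in H by (field; lra).
  unfold v in *. lra.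
Qed.
End Amat.

Lemma rsum_sum_f : forall N F, rsum (S N) F = sum_f_R0 F N.
Proof. induction N; intros. unfold rsum; simpl; ring. rewrite rsum_S_r, IHN. reflexivity. Qed.

Lemma exp_partial : forall x N, 0 <= x -> rsum (S N) (fun k => x ^ k / INR (fact k)) <= exp x.
Proof.
  intros x N Hx.
  assert (Hcv : Un_cv (fun M => sum_f_R0 (fun i => / INR (fact i) * x ^ i) M) (exp x)).
  { unfold exp. destruct (exist_exp x) as [l Hl]. simpl. exact Hl. }
  rewrite rsum_sum_f.
  replace (sum_f_R0 (fun k => x ^ k / INR (fact k)) N) with (sum_f_R0 (fun i => / INR (fact i) * x ^ i) N).
  - apply growing_ineq; auto. intro M. rewrite tech5.
    assert (0 < / INR (fact (S M))) by (apply Rinv_0_lt_compat, INR_fact_lt_0).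
    assert (0 <= x ^ S M) by (apply pow_le; auto).
    assert (0 <= / INR (fact (S M)) * x ^ S M) by (apply Rmult_le_pos; lra). lra.
  - apply sum_eq. intros. unfold Rdiv. ring.
Qed.

Lemma pois_nonneg : forall lam k, 0 <= lam -> 0 <= poisson_pmf lam k.
Proof.
  intros. unfold poisson_pmf. unfold Rdiv. apply Rmult_le_pos. apply Rmult_le_pos.
  left; apply exp_pos. apply pow_le; auto. left; apply Rinv_0_lt_compat, INR_fact_lt_0.
Qed.

Lemma pois_pos : forall lam k, 0 < lam -> 0 < poisson_pmf lam k.
Proof.
  intros. unfold poisson_pmf. unfold Rdiv. apply Rmult_lt_0_compat. apply Rmult_lt_0_compat.
  apply exp_pos. apply pow_lt; auto. apply Rinv_0_lt_compat, INR_fact_lt_0.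
Qed.

Lemma pois_sum_bound : forall lam r a N, 0 <= lam -> 0 <= r ->
  rsum (S N) (fun k => poisson_pmf lam k * (exp a * r ^ k)) <= exp (a - lam + lam * r).
Proof.
  intros lam r a N Hl Hr.
  rewrite (rsum_ext _ _ (fun k => exp a * exp (- lam) * ((lam * r) ^ k / INR (fact k)))).
  - rewrite rsum_scal. replace (a - lam + lam * r) with (a + - lam + lam * r) by ring.
    rewrite !exp_plus. apply Rmult_le_compat_l.
    apply Rmult_le_pos; left; apply exp_pos. apply exp_partial. nra.
  - intros. unfold poisson_pmf. rewrite Rpow_mult_distr. unfold Rdiv. ring.
Qed.

Definition lsum {A : Type} (G : A -> R) (l : list A) : R := fold_right Rplus 0 (map G l).

Lemma lsum_app : forall {A} G (la lb : list A), lsum G (la ++ lb) = lsum G la + lsum G lb.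
Proof. intros. unfold lsum. rewrite map_app, fold_right_app. generalize (map G la). induction l; simpl; lra. Qed.

Lemma lsum_flat_map : forall {A B} (G : B -> R) (F : A -> list B) l,
  lsum G (flat_map F l) = lsum (fun x => lsum G (F x)) l.
Proof. induction l; simpl. reflexivity. rewrite lsum_app, IHl. reflexivity. Qed.

Lemma lsum_map : forall {A B} (G : B -> R) (F : A -> B) l, lsum G (map F l) = lsum (fun x => G (F x)) l.
Proof. intros. unfold lsum. rewrite map_map. reflexivity. Qed.

Lemma lsum_scal : forall {A} c (G : A -> R) l, lsum (fun x => c * G x) l = c * lsum G l.
Proof. induction l; simpl. unfold lsum; simpl; ring. unfold lsum in *; simpl. rewrite IHl. ring. Qed.

Lemma lsum_plus : forall {A} (G H : A -> R) l, lsum (fun x => G x + H x) l = lsum G l + lsum H l.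
Proof. induction l; unfold lsum in *; simpl. ring. rewrite IHl. ring. Qed.

Lemma lsum_le : forall {A} (G H : A -> R) l, (forall x, In x l -> G x <= H x) -> lsum G l <= lsum H l.
Proof.
  induction l; intros Hl; unfold lsum in *; simpl. lra.
  assert (G a <= H a) by (apply Hl; left; auto).
  assert (fold_right Rplus 0 (map G l) <= fold_right Rplus 0 (map H l)) by (apply IHl; intros; apply Hl; right; auto).
  lra.
Qed.

Lemma lsum_ext : forall {A} (G H : A -> R) l, (forall x, In x l -> G x = H x) -> lsum G l = lsum H l.
Proof. intros. apply Rle_antisym; apply lsum_le; intros; rewrite H0 by auto; lra. Qed.

Lemma lsum_nonneg : forall {A} (G : A -> R) l, (forall x, In x l -> 0 <= G x) -> 0 <= lsum G l.
Proof. induction l; intros; unfold lsum in *; simpl. lra.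
  assert (0 <= G a) by (apply H; left; auto).
  assert (0 <= fold_right Rplus 0 (map G l)) by (apply IHl; intros; apply H; right; auto). lra. Qed.

Lemma lsum_term : forall {A} (G : A -> R) l x, (forall y, In y l -> 0 <= G y) -> In x l -> G x <= lsum G l.
Proof.
  induction l; intros x Hp Hx. destruct Hx. unfold lsum in *; simpl.
  destruct Hx as [<-|Hx].
  - assert (0 <= fold_right Rplus 0 (map G l)) by (apply (lsum_nonneg G l); intros; apply Hp; right; auto). lra.
  - assert (G x <= fold_right Rplus 0 (map G l)) by (apply IHl; auto; intros; apply Hp; right; auto).
    assert (0 <= G a) by (apply Hp; left; auto). lra.
Qed.

Lemma lsum_const_le : forall {A} (G : A -> R) l c, (forall x, In x l -> G x <= c) -> lsum G l <= INR (length l) * c.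
Proof.
  induction l; intros c H; unfold lsum in *; cbn [map fold_right length]. simpl; lra.
  rewrite S_INR. assert (G a <= c) by (apply H; left; auto).
  assert (fold_right Rplus 0 (map G l) <= INR (length l) * c) by (apply IHl; intros; apply H; right; auto). lra.
Qed.

Lemma box_length : forall n N y, In y (box n N) -> length y = n.
Proof.
  induction n; intros N y H. simpl in H. destruct H as [<-|[]]. reflexivity.
  change (In y (flat_map (fun k => map (cons k) (box n N)) (seq 0 (S N)))) in H.
  apply in_flat_map in H. destruct H as [k [_ Hk]]. apply in_map_iff in Hk.
  destruct Hk as [y' [<- Hy']]. simpl. f_equal. eapply IHn; eauto.
Qed.

Lemma box_prod : forall n N (h : nat -> nat -> R),
  lsum (fun y => rprod n (fun i => h i (nth i y 0%nat))) (box n N) = rprod n (fun i => rsum (S N) (h i)).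
Proof.
  induction n; intros N h. unfold lsum; simpl. unfold rprod; simpl. ring.
  change (box (S n) N) with (flat_map (fun k => map (cons k) (box n N)) (seq 0 (S N))).
  rewrite lsum_flat_map. rewrite rprod_S.
  rewrite (lsum_ext _ (fun k => h 0%nat k * rprod n (fun i => rsum (S N) (h (S i))))).
  - rewrite (lsum_ext _ (fun x => rprod n (fun i => rsum (S N) (h (S i))) * h 0%nat x)) by (intros; ring).
    rewrite lsum_scal. change (rsum (S N) (h 0%nat)) with (lsum (h 0%nat) (seq 0 (S N))). ring.
  - intros k _. rewrite lsum_map.
    rewrite (lsum_ext _ (fun y => h 0%nat k * rprod n (fun i => h (S i) (nth i y 0%nat)))).
    + rewrite lsum_scal. rewrite (IHn N (fun i => h (S i))). reflexivity.
    + intros y _. rewrite rprod_S. reflexivity.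
Qed.

Lemma joint_nonneg : forall lam y, (forall i, (i < length y)%nat -> 0 <= lam i) -> 0 <= joint_pmf lam y.
Proof. intros. unfold joint_pmf. apply rprod_nonneg. intros. apply pois_nonneg; auto. Qed.

Lemma be_le : forall n N lam g1 g2, (forall i, (i < n)%nat -> 0 <= lam i) ->
  (forall y, In y (box n N) -> g1 y <= g2 y) -> box_expect n N lam g1 <= box_expect n N lam g2.
Proof.
  intros. unfold box_expect. apply (lsum_le (fun y => joint_pmf lam y * g1 y) (fun y => joint_pmf lam y * g2 y)).
  intros. apply Rmult_le_compat_l. apply joint_nonneg. rewrite (box_length n N x H1). auto. auto.
Qed.

Lemma be_plus : forall n N lam g1 g2,
  box_expect n N lam (fun y => g1 y + g2 y) = box_expect n N lam g1 + box_expect n N lam g2.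
Proof.
  intros. unfold box_expect. fold (lsum (fun y => joint_pmf lam y * (g1 y + g2 y)) (box n N)).
  rewrite (lsum_ext _ (fun y => joint_pmf lam y * g1 y + joint_pmf lam y * g2 y)) by (intros; ring).
  apply lsum_plus.
Qed.

Lemma be_scal : forall n N lam c g,
  box_expect n N lam (fun y => c * g y) = c * box_expect n N lam g.
Proof.
  intros. unfold box_expect. fold (lsum (fun y => joint_pmf lam y * (c * g y)) (box n N)).
  rewrite (lsum_ext _ (fun y => c * (joint_pmf lam y * g y))) by (intros; ring).
  apply lsum_scal.
Qed.

Lemma be_lsum : forall {A} n N lam (G : A -> list nat -> R) l,
  box_expect n N lam (fun y => lsum (fun u => G u y) l) = lsum (fun u => box_expect n N lam (G u)) l.
Proof.
  induction l.
  - unfold box_expect, lsum; simpl. induction (box n N); simpl. reflexivity. rewrite IHl. ring.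
  - change (box_expect n N lam (fun y => G a y + lsum (fun u => G u y) l) =
            box_expect n N lam (G a) + lsum (fun u => box_expect n N lam (G u)) l).
    rewrite be_plus, IHl. reflexivity.
Qed.

Lemma be_w : forall n N lam (a r : nat -> R), (forall i, (i < n)%nat -> 0 <= lam i) -> (forall i, 0 <= r i) ->
  box_expect n N lam (fun y => rprod n (fun i => exp (a i) * r i ^ (nth i y 0%nat)))
   <= exp (rsum n (fun i => a i - lam i + lam i * r i)).
Proof.
  intros n N lam a r Hl Hr. unfold box_expect.
  fold (lsum (fun y => joint_pmf lam y * rprod n (fun i => exp (a i) * r i ^ (nth i y 0%nat))) (box n N)).
  rewrite (lsum_ext _ (fun y => rprod n (fun i => (fun i k => poisson_pmf (lam i) k * (exp (a i) * r i ^ k)) i (nth i y 0%nat)))).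
  - pose proof (box_prod n N (fun i k => poisson_pmf (lam i) k * (exp (a i) * r i ^ k))) as HB.
    cbv beta in HB. rewrite HB. rewrite <- rprod_exp. apply rprod_le. intros i Hi. split.
    + apply rsum_nonneg. intros. apply Rmult_le_pos. apply pois_nonneg; auto.
      apply Rmult_le_pos. left; apply exp_pos. apply pow_le; auto.
    + apply pois_sum_bound; auto.
  - intros y Hy. unfold joint_pmf. rewrite (box_length n N y Hy). rewrite <- rprod_mult. reflexivity.
Qed.

Lemma be_const : forall n N lam c, (forall i, (i < n)%nat -> 0 <= lam i) -> 0 <= c -> box_expect n N lam (fun _ => c) <= c.
Proof.
  intros n N lam c Hl Hc.
  replace (fun _ : list nat => c) with (fun y : list nat => c * rprod n (fun i => exp ((fun _ => 0) i) * (fun _ => 1) i ^ (nth i y 0%nat))).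
  - rewrite be_scal. rewrite <- (Rmult_1_r c) at 2. apply Rmult_le_compat_l; auto.
    eapply Rle_trans. apply be_w; auto. intros; lra.
    rewrite (rsum_ext _ _ (fun _ => 0)). rewrite rsum_zero, exp_0. lra. intros; ring.
  - apply functional_extensionality. intros y.
    rewrite (rprod_ext _ _ (fun _ => exp 0)). rewrite rprod_exp, rsum_zero, exp_0. ring.
    intros. rewrite pow1. ring.
Qed.

Lemma expo_term : forall lam nu mu B, 0 < nu -> 0 < mu -> nu <= B -> mu <= B -> mu <= 5 * nu ->
  - (mu - nu) / 2 - lam + lam * (sqrt mu / sqrt nu)
   <= - ((mu - nu) ^ 2 / (8 * B)) + 2 * Rabs (lam - nu).
Proof.
  intros lam nu mu B Hnu Hmu HnB HmB H5.
  set (a := sqrt mu). set (b := sqrt nu).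
  assert (Ha : 0 < a) by (apply sqrt_lt_R0; auto).
  assert (Hb : 0 < b) by (apply sqrt_lt_R0; auto).
  assert (Ha2 : a * a = mu) by (apply sqrt_sqrt; lra).
  assert (Hb2 : b * b = nu) by (apply sqrt_sqrt; lra).
  set (r := a / b).
  assert (Har : a = r * b) by (unfold r; field; lra).
  assert (Hr0 : 0 <= r) by (unfold r; apply Rmult_le_pos; [lra | left; apply Rinv_0_lt_compat; lra]).
  assert (Hr3 : r <= 3).
  { destruct (Rle_dec r 3); auto. exfalso.
    assert (r * r > 9) by nra.
    assert (mu = r * r * nu) by (rewrite <- Ha2, <- Hb2, Har; ring). nra. }
  set (d := lam - nu).
  assert (E : - (mu - nu) / 2 - lam + lam * r = - (a - b) ^ 2 / 2 + d * (r - 1)).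
  { unfold d. rewrite <- Ha2, <- Hb2. rewrite Har. field. }
  rewrite E.
  assert (Hd : d * (r - 1) <= 2 * Rabs d).
  { destruct (Rle_dec 0 d).
    - rewrite Rabs_right by lra. nra.
    - rewrite Rabs_left by lra. nra. }
  assert (HB : 0 < B) by lra.
  assert (Hq : (mu - nu) ^ 2 <= (a - b) ^ 2 * (4 * B)).
  { rewrite <- Ha2, <- Hb2.
    replace ((a * a - b * b) ^ 2) with ((a - b) ^ 2 * (a + b) ^ 2) by ring.
    apply Rmult_le_compat_l. apply pow2_ge_0.
    assert ((a + b) ^ 2 <= 2 * (a * a + b * b)) by (assert (0 <= (a-b)^2) by apply pow2_ge_0; nra).
    lra. }
  assert ((mu - nu) ^ 2 / (8 * B) <= (a - b) ^ 2 / 2).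
  { apply (Rmult_le_reg_r (8 * B)). lra. unfold Rdiv. rewrite Rmult_assoc, Rinv_l by lra. lra. }
  unfold Rdiv in *. lra.
Qed.

Fixpoint amax {B : Type} (F : B -> R) (l : list B) (d : B) : B :=
  match l with
  | [] => d
  | u :: l' => match l' with
               | [] => u
               | _ => let b := amax F l' d in if Rlt_dec (F b) (F u) then u else b
               end
  end.

Lemma amax_spec : forall {B} (F : B -> R) l d, l <> [] ->
  In (amax F l d) l /\ forall u, In u l -> F u <= F (amax F l d).
Proof.
  induction l as [|u l IH]; intros d Hl. congruence.
  destruct l as [|v l'].
  - simpl. split. auto. intros w [<-|[]]. lra.
  - assert (H : v :: l' <> []) by congruence. destruct (IH d H) as [H1 H2].
    change (amax F (u :: v :: l') d) with
      (if Rlt_dec (F (amax F (v :: l') d)) (F u) then u else amax F (v :: l') d).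
    destruct (Rlt_dec (F (amax F (v :: l') d)) (F u)) as [Hlt|Hge].
    + split. left; auto. intros w [<-|Hw]. lra. specialize (H2 w Hw). lra.
    + split. right; auto. intros w [<-|Hw]. lra. auto.
Qed.

Fixpoint lists {A : Type} (k : nat) (X : list A) : list (list A) :=
  match k with
  | O => [ [] ]
  | S k' => flat_map (fun x => map (cons x) (lists k' X)) X
  end.

Lemma flat_map_length_const : forall {A B} (f : A -> list B) c l,
  (forall x, length (f x) = c) -> length (flat_map f l) = (length l * c)%nat.
Proof. induction l; intros H; simpl. auto. rewrite length_app, H, IHl; auto. Qed.

Lemma lists_length : forall {A} k (X : list A), length (lists k X) = (length X ^ k)%nat.
Proof.
  induction k; intros. reflexivity. simpl lists.
  rewrite (flat_map_length_const _ (length (lists k X))). rewrite IHk. simpl. lia.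
  intros. apply length_map.
Qed.

Lemma lists_In : forall {A} k (X : list A) L, length L = k -> (forall x, In x L -> In x X) -> In L (lists k X).
Proof.
  induction k; intros X L HL HX. destruct L; [left; auto | discriminate].
  destruct L as [|x L]. discriminate. simpl lists. apply in_flat_map. exists x. split.
  apply HX; left; auto. apply in_map. apply IHk. simpl in HL; lia. intros; apply HX; right; auto.
Qed.

Lemma lists_len_mem : forall {A} k (X : list A) L, In L (lists k X) -> length L = k.
Proof.
  induction k; intros X L H. simpl in H. destruct H as [<-|[]]. auto.
  simpl lists in H. apply in_flat_map in H. destruct H as [x [_ H]]. apply in_map_iff in H.
  destruct H as [L' [<- H]]. simpl. f_equal. eapply IHk; eauto.
Qed.

Definition dec (p Mn : nat) (L : list (nat * nat)) (j : nat) : R :=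
  if Nat.eqb j 0 then / sqrt (INR p)
  else lsum (fun q => if Nat.eqb (fst q) j then (INR (snd q) - INR Mn) / INR Mn else 0) L.

Lemma dec_support : forall p Mn L j, j <> 0%nat -> dec p Mn L j <> 0 -> In j (map fst L).
Proof.
  intros p Mn L j Hj. unfold dec. destruct (Nat.eqb_spec j 0). lia.
  induction L as [|q L IH]; intros H. unfold lsum in H; simpl in H. lra.
  unfold lsum in H. simpl in H. fold (lsum (fun q => if Nat.eqb (fst q) j then (INR (snd q) - INR Mn) / INR Mn else 0) L) in H.
  destruct (Nat.eqb_spec (fst q) j). left; auto. right. apply IH. lra.
Qed.

Lemma dec_l0 : forall p Mn s L L', length L = s -> length L' = s ->
  (l0 p (fun j => (dec p Mn L j - dec p Mn L' j)%R) <= 2 * s)%nat.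
Proof.
  intros p Mn s L L' H1 H2.
  replace (2 * s)%nat with (length (map fst L ++ map fst L')) by (rewrite length_app, !length_map; lia).
  apply l0_bound. intros i Hi Hne.
  destruct (Nat.eq_dec i 0). subst. unfold dec in Hne. simpl in Hne. lra.
  apply in_or_app. destruct (Req_EM_T (dec p Mn L i) 0).
  - right. apply dec_support with p Mn; auto. lra.
  - left. apply dec_support with p Mn; auto.
Qed.

Lemma lsum_nodup_sel : forall (l : list nat) j (G : nat -> R), NoDup l ->
  lsum (fun j' => if Nat.eqb j' j then G j' else 0) l = if in_dec Nat.eq_dec j l then G j else 0.
Proof.
  induction l as [|x l IH]; intros j G Hnd. reflexivity.
  inversion Hnd; subst.
  change (lsum (fun j' => if Nat.eqb j' j then G j' else 0) (x :: l)) with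
    ((if Nat.eqb x j then G x else 0) + lsum (fun j' => if Nat.eqb j' j then G j' else 0) l).
  rewrite IH by auto. destruct (Nat.eqb_spec x j).
  - subst. destruct (in_dec Nat.eq_dec j l). contradiction.
    destruct (in_dec Nat.eq_dec j (j :: l)). ring. exfalso; apply n0; left; auto.
  - destruct (in_dec Nat.eq_dec j l) as [i1|i1]; destruct (in_dec Nat.eq_dec j (x :: l)) as [i2|i2].
    ring. exfalso; apply i2; right; auto. destruct i2; [congruence|contradiction]. ring.
Qed.

Definition rnd (Mn : nat) (x : R) : nat := Z.to_nat (up (x * INR Mn) - 1 + Z.of_nat Mn).

Lemma rnd_spec : forall Mn x, (1 <= Mn)%nat -> -1 <= x <= 1 ->
  (rnd Mn x <= 2 * Mn)%nat /\ Rabs (x - (INR (rnd Mn x) - INR Mn) / INR Mn) <= / INR Mn.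
Proof.
  intros Mn x HM Hx. unfold rnd.
  assert (HMp : 0 < INR Mn) by (apply lt_0_INR; lia).
  set (z := (up (x * INR Mn) - 1)%Z).
  destruct (archimed (x * INR Mn)) as [A1 A2].
  assert (Hz1 : IZR z <= x * INR Mn) by (unfold z; rewrite minus_IZR; simpl; lra).
  assert (Hz2 : x * INR Mn < IZR z + 1) by (unfold z; rewrite minus_IZR; simpl; lra).
  assert (Hlo : (- Z.of_nat Mn <= z)%Z).
  { assert (IZR z > IZR (- Z.of_nat Mn - 1)).
    { rewrite minus_IZR, opp_IZR, <- INR_IZR_INZ. simpl. nra. }
    apply Rgt_lt, lt_IZR in H. lia. }
  assert (Hhi : IZR z <= INR Mn) by nra.
  assert (Hnat : INR (Z.to_nat (z + Z.of_nat Mn)) = IZR z + INR Mn).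
  { rewrite INR_IZR_INZ, Z2Nat.id by lia. rewrite plus_IZR, <- INR_IZR_INZ. reflexivity. }
  split.
  - apply INR_le. rewrite Hnat, mult_INR. simpl. lra.
  - rewrite Hnat. replace (x - (IZR z + INR Mn - INR Mn) / INR Mn) with ((x * INR Mn - IZR z) / INR Mn) by (field; lra).
    unfold Rdiv. rewrite Rabs_mult, (Rabs_right (/ INR Mn)) by (left; apply Rinv_0_lt_compat; lra).
    rewrite Rabs_right by lra.
    assert (0 < / INR Mn) by (apply Rinv_0_lt_compat; lra). nra.
Qed.

Definition coef (p : nat) (D : nat -> nat -> R) (f : nat -> R) (j : nat) : R :=
  rsum p (fun k => D k j * f k).

Definition supp (p : nat) (D : nat -> nat -> R) (f : nat -> R) : list nat :=
  filter (fun j => if Req_EM_T (coef p D f j) 0 then false else true) (seq 1 (p - 1)).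

Definition L0 (p Mn s : nat) (D : nat -> nat -> R) (f : nat -> R) : list (nat * nat) :=
  map (fun j => (j, rnd Mn (coef p D f j))) (supp p D f) ++ repeat (0%nat, 0%nat) (s - length (supp p D f)).

Lemma D_entry_le1 : forall p D, orthonormal p D -> forall k j, (k < p)%nat -> (j < p)%nat -> Rabs (D k j) <= 1.
Proof.
  intros p D HD k j Hk Hj.
  assert (D k j * D k j <= 1).
  { assert (HDjj := HD j j Hj Hj). rewrite Nat.eqb_refl in HDjj. rewrite <- HDjj.
    apply (rsum_term_le p (fun k' => D k' j * D k' j)). intros. nra. auto. }
  destruct (Rle_dec (Rabs (D k j)) 1); auto.
  assert (Rabs (D k j) * Rabs (D k j) > 1) by nra.
  rewrite <- Rabs_mult in H0. rewrite Rabs_right in H0 by nra. lra.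
Qed.

Section Approx.
Variables (p Mn s : nat) (D : nat -> nat -> R) (f : nat -> R).
Hypothesis HD : orthonormal p D.
Hypothesis HD0 : first_col_const p D.
Hypothesis Hp : (1 <= p)%nat.
Hypothesis HM : (1 <= Mn)%nat.
Hypothesis Hf : in_F p s D f.

Lemma coef_le1 : forall j, (j < p)%nat -> Rabs (coef p D f j) <= 1.
Proof.
  intros j Hj. destruct Hf as [Hf1 [Hf2 _]]. unfold coef.
  eapply Rle_trans. apply rsum_abs. rewrite <- Hf2. apply rsum_le. intros k Hk.
  rewrite Rabs_mult. rewrite (Rabs_right (f k)) by (apply Rle_ge; auto).
  pose proof (D_entry_le1 p D HD k j Hk Hj). pose proof (Hf1 k Hk). nra.
Qed.

Lemma coef0 : coef p D f 0 = / sqrt (INR p).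
Proof.
  destruct Hf as [Hf1 [Hf2 _]]. unfold coef.
  rewrite (rsum_ext _ _ (fun k => / sqrt (INR p) * f k)). rewrite rsum_scal, Hf2. ring.
  intros. rewrite HD0; auto.
Qed.

Lemma supp_len : (length (supp p D f) <= s)%nat.
Proof. destruct Hf as [_ [_ H]]. exact H. Qed.

Lemma L0_len : length (L0 p Mn s D f) = s.
Proof. unfold L0. rewrite length_app, length_map, repeat_length. pose proof supp_len. lia. Qed.

Lemma L0_in : In (L0 p Mn s D f) (lists s (list_prod (seq 0 p) (seq 0 (S (2 * Mn))))).
Proof.
  apply lists_In. apply L0_len. intros q Hq. unfold L0 in Hq. apply in_app_or in Hq.
  destruct Hq as [Hq|Hq].
  - apply in_map_iff in Hq. destruct Hq as [j [<- Hj]]. unfold supp in Hj. apply filter_In in Hj.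
    destruct Hj as [Hj _]. apply in_seq in Hj. apply in_prod. apply in_seq; lia.
    apply in_seq. split. lia.
    assert (-1 <= coef p D f j <= 1) by (pose proof (coef_le1 j ltac:(lia)); apply Rabs_le_between in H; lra).
    destruct (rnd_spec Mn (coef p D f j) HM H). lia.
  - apply repeat_spec in Hq. subst. apply in_prod; apply in_seq; lia.
Qed.

Lemma lsum_repeat0 : forall k j, (j <> 0)%nat ->
  lsum (fun q : nat * nat => if Nat.eqb (fst q) j then (INR (snd q) - INR Mn) / INR Mn else 0) (repeat (0%nat, 0%nat) k) = 0.
Proof.
  induction k; intros j Hj. reflexivity.
  change (repeat (0%nat,0%nat) (S k)) with ((0%nat,0%nat) :: repeat (0%nat,0%nat) k).
  destruct j as [|j']. lia. specialize (IHk (S j') Hj).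
  unfold lsum in *. simpl. simpl in IHk. rewrite IHk. ring.
Qed.

Lemma approx_coef : forall j, (j < p)%nat -> Rabs (coef p D f j - dec p Mn (L0 p Mn s D f) j) <= / INR Mn.
Proof.
  intros j Hj. assert (HMp : 0 < / INR Mn) by (apply Rinv_0_lt_compat, lt_0_INR; lia).
  unfold dec. destruct (Nat.eqb_spec j 0).
  - subst. rewrite coef0. rewrite Rminus_diag, Rabs_R0. lra.
  - unfold L0. rewrite lsum_app, lsum_repeat0, Rplus_0_r by auto. rewrite lsum_map. simpl.
    pose proof (lsum_nodup_sel (supp p D f) j (fun j' => (INR (rnd Mn (coef p D f j')) - INR Mn) / INR Mn)) as E.
    rewrite E. 2:{ apply NoDup_filter, seq_NoDup. }
    destruct (in_dec Nat.eq_dec j (supp p D f)) as [Hin|Hnin].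
    + assert (-1 <= coef p D f j <= 1) by (pose proof (coef_le1 j Hj); apply Rabs_le_between in H; lra).
      destruct (rnd_spec Mn (coef p D f j) HM H). auto.
    + assert (coef p D f j = 0).
      { destruct (Req_EM_T (coef p D f j) 0); auto. exfalso. apply Hnin. unfold supp. apply filter_In.
        split. apply in_seq. lia. destruct (Req_EM_T (coef p D f j) 0); [contradiction|auto]. }
      rewrite H, Rminus_0_r, Rabs_R0. lra.
Qed.

Lemma f_recon : forall k, (k < p)%nat -> f k = matvec p D (coef p D f) k.
Proof. intros. unfold coef. rewrite D_recon; auto. Qed.

Lemma l1_approx : l1 p (fun k => f k - matvec p D (dec p Mn (L0 p Mn s D f)) k) <= INR p * INR p / INR Mn.
Proof.
  unfold l1. replace (INR p * INR p / INR Mn) with (rsum p (fun _ => INR p / INR Mn)).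
  2:{ rewrite rsum_const. unfold Rdiv. ring. }
  apply rsum_le. intros k Hk. rewrite f_recon by auto. rewrite <- matvec_minus.
  unfold matvec. eapply Rle_trans. apply rsum_abs.
  replace (INR p / INR Mn) with (rsum p (fun _ => / INR Mn)) by (rewrite rsum_const; unfold Rdiv; ring).
  apply rsum_le. intros j Hj. rewrite Rabs_mult.
  pose proof (D_entry_le1 p D HD k j Hk Hj). pose proof (approx_coef j Hj).
  pose proof (Rabs_pos (D k j)). pose proof (Rabs_pos (coef p D f j - dec p Mn (L0 p Mn s D f) j)). nra.
Qed.
End Approx.

Lemma matvec_ext : forall m M u v i, (forall j, (j < m)%nat -> u j = v j) -> matvec m M u i = matvec m M v i.
Proof. intros. unfold matvec. apply rsum_ext. intros. rewrite H; auto. Qed.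

Lemma inv_nonneg : forall x, 0 <= x -> 0 <= / x.
Proof. intros. destruct (Req_dec x 0). subst. rewrite Rinv_0. lra. left. apply Rinv_0_lt_compat. lra. Qed.

Lemma exp_mono : forall x y, x <= y -> exp x <= exp y.
Proof. intros. destruct H. left; apply exp_increasing; auto. subst; lra. Qed.

Lemma ln2_bounds : 0 < ln 2 < 1.
Proof.
  split.
  - rewrite <- ln_1. apply ln_increasing; lra.
  - rewrite <- (ln_exp 1). apply ln_increasing. lra. pose proof (exp_ineq1 1 ltac:(lra)). lra.
Qed.

Lemma ln_le : forall x y, 0 < x -> x <= y -> ln x <= ln y.
Proof. intros. destruct H0. left; apply ln_increasing; auto. subst; lra. Qed.

Section MLE.
Variables (a_l a_u : R) (n p s : nat) (T delta : R) (D At A : nat -> nat -> R) (Mn : nat).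
Hypothesis Hal : a_l < a_u.
Hypothesis Hn : (1 <= n)%nat.
Hypothesis Hp : (1 <= p)%nat.
Hypothesis Hs : (1 <= s)%nat.
Hypothesis HT : 1 <= T.
Hypothesis HD : orthonormal p D.
Hypothesis HD0 : first_col_const p D.
Hypothesis HAt : forall i j, (i < n)%nat -> (j < p)%nat ->
        a_l / sqrt (INR n) <= At i j <= a_u / sqrt (INR n).
Hypothesis HA : forall i j, (i < n)%nat -> (j < p)%nat ->
        A i j = (At i j + (a_u - 2 * a_l) / sqrt (INR n))
                / (2 * (a_u - a_l) * sqrt (INR n)).
Hypothesis Hdelta : 0 <= delta < 1.
Hypothesis HRIP : forall u : nat -> R, (l0 p u <= 2 * s)%nat ->
        (1 - delta) * sqnorm p u <= sqnorm n (matvec p At (matvec p D u)).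
Hypothesis HM : (1 <= Mn)%nat.
Hypothesis HMT : INR p * INR p / INR Mn <= / (4 * (T + 1)).

Definition Xg := list_prod (seq 0 p) (seq 0 (S (2 * Mn))).
Definition netU := map (dec p Mn) (lists s Xg).
Definition valid (u : nat -> R) : Prop :=
  exists f', in_F p s D f' /\ l1 p (fun j => matvec p D u j - f' j) <= / 4.
Definition validb (u : nat -> R) : bool :=
  if excluded_middle_informative (valid u) then true else false.
Definition Snet := filter validb netU.
Definition lamu (u : nat -> R) (i : nat) : R := T * matvec p A (matvec p D u) i.
Definition lik (u : nat -> R) (y : list nat) : R := joint_pmf (lamu u) y.
Definition uhat (y : list nat) : nat -> R := amax (fun u => lik u y) Snet (fun _ => 0).
Definition fhat (y : list nat) : nat -> R := matvec p D (uhat y).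

Definition Kc := 2 * (a_u - a_l).
Definition cc := / (10 * Kc ^ 2).
Definition r0 := (ln (INR (length Snet)) + ln T + 5) / (cc * T * (1 - delta)).

Lemma Snet_valid : forall u, In u Snet -> valid u /\ exists L, In L (lists s Xg) /\ u = dec p Mn L.
Proof.
  intros u Hu. unfold Snet in Hu. apply filter_In in Hu. destruct Hu as [H1 H2].
  split.
  - unfold validb in H2. destruct (excluded_middle_informative (valid u)); auto. discriminate.
  - unfold netU in H1. apply in_map_iff in H1. destruct H1 as [L [<- HL]]. eauto.
Qed.

Lemma T_pos : 0 < T.
Proof. lra. Qed.

Lemma lamu_bounds : forall u i, valid u -> (i < n)%nat -> T / (4 * INR n) <= lamu u i <= 5 * T / (4 * INR n).
Proof.
  intros u i [f' [[Hf1 [Hf2 _]] Hl]] Hi. unfold lamu.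
  destruct (A_intensity a_l a_u n p At A Hal Hn HAt HA (matvec p D u) f' i Hi Hf1 Hf2 Hl).
  split. replace (T / (4 * INR n)) with (T * / (4 * INR n)) by (unfold Rdiv; ring). apply Rmult_le_compat_l; lra.
  replace (5 * T / (4 * INR n)) with (T * (5 / (4 * INR n))) by (unfold Rdiv; ring). apply Rmult_le_compat_l; lra.
Qed.

Lemma sqnorm_D_diff : forall u v, sqnorm p (fun j => u j - v j) = sqnorm p (fun k => matvec p D u k - matvec p D v k).
Proof.
  intros. rewrite <- (D_iso p D HD). unfold sqnorm. apply rsum_ext. intros. rewrite matvec_minus. reflexivity.
Qed.

Lemma dec0 : forall L, dec p Mn L 0 = / sqrt (INR p).
Proof. intros. reflexivity. Qed.

Section Fixf.
Variable f : nat -> R.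
Hypothesis Hf : in_F p s D f.

Definition u0 := dec p Mn (L0 p Mn s D f).
Definition dd (u : nat -> R) := sqnorm p (fun j => u j - u0 j).
Definition lamf (i : nat) := T * matvec p A f i.

Lemma l1_f0 : l1 p (fun j => matvec p D u0 j - f j) <= / (4 * (T + 1)).
Proof.
  eapply Rle_trans. 2: apply HMT. eapply Rle_trans. 2: apply (l1_approx p Mn s D f HD HD0 Hp HM Hf).
  right. unfold l1. apply rsum_ext. intros. apply Rabs_minus_sym.
Qed.

Lemma u0_valid : valid u0.
Proof.
  exists f. split. auto. eapply Rle_trans. apply l1_f0.
  apply Rinv_le_contravar; lra.
Qed.

Lemma u0_in : In u0 Snet.
Proof.
  unfold Snet. apply filter_In. split.
  - unfold netU. apply in_map. apply L0_in; auto.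
  - unfold validb. destruct (excluded_middle_informative (valid u0)). auto. exfalso; apply n0, u0_valid.
Qed.

Lemma Snet_ne : Snet <> [].
Proof. intro H. pose proof u0_in. rewrite H in H0. destruct H0. Qed.

Lemma l1_inF_diff : forall f', in_F p s D f' -> l1 p (fun j => f' j - f j) <= 2.
Proof.
  intros f' [H1 [H2 _]]. destruct Hf as [G1 [G2 _]]. unfold l1.
  apply Rle_trans with (rsum p (fun j => f' j + f j)).
  - apply rsum_le. intros. pose proof (H1 i H). pose proof (G1 i H).
    apply Rabs_le. lra.
  - rewrite rsum_plus, H2, G2. lra.
Qed.

Lemma u0_valid_aux : l1 p (fun j => matvec p D u0 j - f j) <= / 4.
Proof. eapply Rle_trans. apply l1_f0. apply Rinv_le_contravar; lra. Qed.

Lemma dd_le9 : forall u, In u Snet -> dd u <= 9.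
Proof.
  intros u Hu. destruct (Snet_valid u Hu) as [[f' [Hf' Hl]] _].
  unfold dd. rewrite sqnorm_D_diff. eapply Rle_trans. apply sqnorm_le_l1.
  assert (H1 := l1_tri p (matvec p D u) f (matvec p D u0)).
  assert (H2 := l1_tri p (matvec p D u) f' f).
  assert (H3 := l1_inF_diff f' Hf').
  assert (H4 : l1 p (fun j => f j - matvec p D u0 j) <= / 4).
  { eapply Rle_trans. 2: apply u0_valid_aux. right. unfold l1. apply rsum_ext. intros. apply Rabs_minus_sym. }
  assert (0 <= l1 p (fun j => matvec p D u j - matvec p D u0 j)) by apply l1_nonneg.
  assert (l1 p (fun j => matvec p D u j - matvec p D u0 j) <= 3) by lra.
  nra.
Qed.


Lemma sum_abs_lam : rsum n (fun i => Rabs (lamf i - lamu u0 i)) <= / 4.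
Proof.
  unfold lamf, lamu.
  rewrite (rsum_ext n _ (fun i => T * Rabs (matvec p A (fun j => f j - matvec p D u0 j) i))).
  2:{ intros. rewrite matvec_minus. rewrite <- Rmult_minus_distr_l, Rabs_mult, Rabs_right by lra. reflexivity. }
  rewrite rsum_scal.
  pose proof (A_l1 a_l a_u n p At A Hal Hn HAt HA (fun j => f j - matvec p D u0 j)).
  assert (l1 p (fun j => f j - matvec p D u0 j) <= / (4 * (T + 1))).
  { eapply Rle_trans. 2: apply l1_f0. right. unfold l1. apply rsum_ext. intros. apply Rabs_minus_sym. }
  assert (T * / (4 * (T + 1)) <= / 4).
  { apply (Rmult_le_reg_r (4 * (T + 1))). lra. rewrite Rmult_assoc, Rinv_l by lra.
    replace (/ 4 * (4 * (T + 1))) with (T + 1) by field. lra. }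
  assert (0 <= rsum n (fun i => Rabs (matvec p A (fun j => f j - matvec p D u0 j) i))) by (apply rsum_nonneg; intros; apply Rabs_pos).
  nra.
Qed.

Lemma sum_zero_diff : forall u, In u Snet -> rsum p (fun k => matvec p D u k - matvec p D u0 k) = 0.
Proof.
  intros u Hu. destruct (Snet_valid u Hu) as [_ [L [_ ->]]].
  rewrite rsum_minus, !(sum_Dv p D HD HD0 Hp). unfold u0. rewrite !dec0. ring.
Qed.

Lemma sq_diff_lower : forall u, In u Snet ->
  T ^ 2 * (1 - delta) * dd u / (Kc ^ 2 * INR n) <= rsum n (fun i => (lamu u i - lamu u0 i) ^ 2).
Proof.
  intros u Hu. pose proof (INRn_pos n Hn) as Hn0.
  assert (Hsn : 0 < sqrt (INR n)) by (apply sqrt_lt_R0; auto).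
  assert (HK : 0 < Kc) by (unfold Kc; lra).
  rewrite (rsum_ext n _ (fun i => (T ^ 2 / (Kc ^ 2 * INR n)) * (matvec p At (matvec p D (fun j => u j - u0 j)) i) ^ 2)).
  - rewrite rsum_scal. fold (sqnorm n (matvec p At (matvec p D (fun j => u j - u0 j)))).
    destruct (Snet_valid u Hu) as [_ [L [HL ->]]].
    assert (Hl0 := dec_l0 p Mn s L (L0 p Mn s D f) (lists_len_mem s Xg L HL) (ltac:(eapply L0_len; eauto) : length (L0 p Mn s D f) = s)).
    pose proof (HRIP _ Hl0). fold u0 in H. fold (dd (dec p Mn L)) in H.
    assert (0 < T ^ 2 / (Kc ^ 2 * INR n)).
    { unfold Rdiv. apply Rmult_lt_0_compat. apply pow_lt; lra. apply Rinv_0_lt_compat. apply Rmult_lt_0_compat; [apply pow_lt; lra | lra]. }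
    replace (T ^ 2 * (1 - delta) * dd (dec p Mn L) / (Kc ^ 2 * INR n))
      with (T ^ 2 / (Kc ^ 2 * INR n) * ((1 - delta) * dd (dec p Mn L))) by (field; split; lra).
    apply Rmult_le_compat_l; lra.
  - intros i Hi. unfold lamu. rewrite <- Rmult_minus_distr_l. rewrite <- matvec_minus.
    rewrite (A_diff a_l a_u n p At A Hal Hn HA) by (auto; apply sum_zero_diff; auto).
    rewrite (matvec_ext p At _ (matvec p D (fun j => u j - u0 j))).
    + unfold Kc. set (sn := sqrt (INR n)) in *. assert (Hsn2 : INR n = sn * sn) by (unfold sn; rewrite sqrt_sqrt; lra). rewrite Hsn2. field. split; lra.
    + intros. rewrite matvec_minus. reflexivity.
Qed.

Lemma expo_sum : forall u, In u Snet ->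
  rsum n (fun i => - (lamu u i - lamu u0 i) / 2 - lamf i + lamf i * (sqrt (lamu u i) / sqrt (lamu u0 i)))
  <= / 2 - cc * T * (1 - delta) * dd u.
Proof.
  intros u Hu. pose proof (INRn_pos n Hn) as Hn0.
  assert (HK : 0 < Kc) by (unfold Kc; lra).
  destruct (Snet_valid u Hu) as [Hv _].
  set (B := 5 * T / (4 * INR n)).
  assert (HB : 0 < B) by (unfold B; apply Rdiv_lt_0_compat; lra).
  apply Rle_trans with (rsum n (fun i => - (/ (8 * B)) * (lamu u i - lamu u0 i) ^ 2 + 2 * Rabs (lamf i - lamu u0 i))).
  - apply rsum_le. intros i Hi.
    destruct (lamu_bounds u i Hv Hi) as [m1 m2]. destruct (lamu_bounds u0 i u0_valid Hi) as [v1 v2].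
    assert (0 < T / (4 * INR n)) by (apply Rdiv_lt_0_compat; lra).
    assert (5 * T / (4 * INR n) = 5 * (T / (4 * INR n))) by (unfold Rdiv; ring).
    eapply Rle_trans. apply (expo_term _ _ _ B); unfold B; try lra.
    right. unfold Rdiv. ring.
  - rewrite rsum_plus, rsum_scal, rsum_scal.
    pose proof (sq_diff_lower u Hu). pose proof sum_abs_lam.
    assert (E : / (8 * B) * (T ^ 2 * (1 - delta) * dd u / (Kc ^ 2 * INR n)) = cc * T * (1 - delta) * dd u).
    { unfold B, cc. field. split; lra. }
    assert (0 < / (8 * B)) by (apply Rinv_0_lt_compat; lra).
    assert (/ (8 * B) * (T ^ 2 * (1 - delta) * dd u / (Kc ^ 2 * INR n)) <= / (8 * B) * rsum n (fun i => (lamu u i - lamu u0 i) ^ 2))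
      by (apply Rmult_le_compat_l; lra).
    lra.
Qed.

Definition w (u : nat -> R) (y : list nat) : R :=
  rprod n (fun i => exp (- (lamu u i - lamu u0 i) / 2) * (sqrt (lamu u i) / sqrt (lamu u0 i)) ^ nth i y 0%nat).

Lemma pois_ratio : forall nu mu k, 0 < nu -> 0 < mu ->
  poisson_pmf nu k * (exp (- (mu - nu) / 2) * (sqrt mu / sqrt nu) ^ k) ^ 2 = poisson_pmf mu k.
Proof.
  intros nu mu k Hnu Hmu.
  assert (Ha : sqrt mu * sqrt mu = mu) by (apply sqrt_sqrt; lra).
  assert (Hb : sqrt nu * sqrt nu = nu) by (apply sqrt_sqrt; lra).
  assert (Hb0 : 0 < sqrt nu) by (apply sqrt_lt_R0; auto).
  assert (E1 : (exp (- (mu - nu) / 2) * (sqrt mu / sqrt nu) ^ k) ^ 2 =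
               (exp (- (mu - nu) / 2) * exp (- (mu - nu) / 2)) * ((sqrt mu / sqrt nu) * (sqrt mu / sqrt nu)) ^ k).
  { rewrite (Rpow_mult_distr (sqrt mu / sqrt nu) (sqrt mu / sqrt nu) k). ring. }
  rewrite E1. rewrite <- exp_plus.
  replace (sqrt mu / sqrt nu * (sqrt mu / sqrt nu)) with (mu * / nu) by (transitivity ((sqrt mu * sqrt mu) * / (sqrt nu * sqrt nu)); [rewrite Ha, Hb; reflexivity | field; lra]).
  unfold poisson_pmf. rewrite Rpow_mult_distr.
  replace (- (mu - nu) / 2 + - (mu - nu) / 2) with (- mu + nu) by field.
  rewrite exp_plus.
  replace (- nu) with (- (nu)) by ring.
  assert (E2 : nu ^ k * (/ nu) ^ k = 1) by (rewrite <- Rpow_mult_distr, Rinv_r, pow1; lra).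
  assert (E3 : exp (- nu) * exp nu = 1) by (rewrite <- exp_plus; replace (- nu + nu) with 0 by ring; apply exp_0).
  unfold Rdiv.
  transitivity (exp (- mu) * mu ^ k * / INR (fact k) * ((nu ^ k * (/ nu) ^ k) * (exp (- nu) * exp nu))).
  ring. rewrite E2, E3. ring.
Qed.

Lemma lik_ident : forall u y, In u Snet -> length y = n -> lik u y = lik u0 y * (w u y) ^ 2.
Proof.
  intros u y Hu Hy. destruct (Snet_valid u Hu) as [Hv _]. pose proof (INRn_pos n Hn).
  unfold lik, joint_pmf, w. rewrite Hy.
  replace ((rprod n (fun i => exp (- (lamu u i - lamu u0 i) / 2) * (sqrt (lamu u i) / sqrt (lamu u0 i)) ^ nth i y 0%nat)) ^ 2)
    with (rprod n (fun i => (exp (- (lamu u i - lamu u0 i) / 2) * (sqrt (lamu u i) / sqrt (lamu u0 i)) ^ nth i y 0%nat) ^ 2)).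
  2:{ rewrite (rprod_ext n _ (fun i => (fun i => exp (- (lamu u i - lamu u0 i) / 2) * (sqrt (lamu u i) / sqrt (lamu u0 i)) ^ nth i y 0%nat) i * (fun i => exp (- (lamu u i - lamu u0 i) / 2) * (sqrt (lamu u i) / sqrt (lamu u0 i)) ^ nth i y 0%nat) i)).
      rewrite rprod_mult. ring. intros. simpl. ring. }
  rewrite <- rprod_mult. apply rprod_ext. intros i Hi.
  destruct (lamu_bounds u i Hv Hi). destruct (lamu_bounds u0 i u0_valid Hi).
  assert (0 < T / (4 * INR n)) by (apply Rdiv_lt_0_compat; lra).
  symmetry. apply pois_ratio; lra.
Qed.

Lemma w_nonneg : forall u y, 0 <= w u y.
Proof.
  intros. unfold w. apply rprod_nonneg. intros. apply Rmult_le_pos. left; apply exp_pos.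
  apply pow_le. unfold Rdiv. apply Rmult_le_pos. apply sqrt_pos. left. apply Rinv_0_lt_compat.
  apply sqrt_lt_R0. destruct (lamu_bounds u0 i u0_valid H). pose proof (INRn_pos n Hn).
  assert (0 < T / (4 * INR n)) by (apply Rdiv_lt_0_compat; lra). lra.
Qed.

Lemma uhat_props : forall y, In (uhat y) Snet /\ forall u, In u Snet -> lik u y <= lik (uhat y) y.
Proof. intros. unfold uhat. apply (amax_spec (fun u => lik u y)). apply Snet_ne. Qed.

Lemma w_uhat_ge1 : forall y, length y = n -> 1 <= w (uhat y) y.
Proof.
  intros y Hy. destruct (uhat_props y) as [H1 H2].
  pose proof (H2 u0 u0_in). rewrite (lik_ident (uhat y) y H1 Hy) in H.
  assert (0 < lik u0 y).
  { unfold lik, joint_pmf. apply rprod_pos. intros i Hi. apply pois_pos. rewrite Hy in Hi.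
    destruct (lamu_bounds u0 i u0_valid Hi). pose proof (INRn_pos n Hn).
    assert (0 < T / (4 * INR n)) by (apply Rdiv_lt_0_compat; lra). lra. }
  pose proof (w_nonneg (uhat y) y).
  destruct (Rle_dec 1 (w (uhat y) y)); auto. exfalso.
  assert (w (uhat y) y ^ 2 < 1) by (simpl; nra). nra.
Qed.

Lemma Snet_len_pos : (1 <= length Snet)%nat.
Proof. destruct Snet eqn:E. exfalso; apply Snet_ne; auto. simpl. lia. Qed.

Lemma r0_pos : 0 < r0.
Proof.
  unfold r0. apply Rdiv_lt_0_compat.
  - assert (0 <= ln (INR (length Snet))).
    { rewrite <- ln_1. apply ln_le. lra. apply (le_INR 1). apply Snet_len_pos. }
    assert (0 <= ln T) by (rewrite <- ln_1; apply ln_le; lra). lra.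
  - unfold cc. assert (0 < Kc) by (unfold Kc; lra).
    assert (0 < / (10 * Kc ^ 2)) by (apply Rinv_0_lt_compat; apply Rmult_lt_0_compat; [lra | apply pow_lt; lra]).
    apply Rmult_lt_0_compat. apply Rmult_lt_0_compat; lra. lra.
Qed.

Lemma loss_pointwise : forall y, length y = n ->
  sqnorm p (fun j => fhat y j - f j) <=
  (2 * r0 + 2 / T) + 2 * lsum (fun u => (if Rlt_dec r0 (dd u) then 9 else 0) * w u y) Snet.
Proof.
  intros y Hy. eapply Rle_trans. apply (sqnorm_tri2 p _ (matvec p D u0)).
  assert (A1 : sqnorm p (fun j => fhat y j - matvec p D u0 j) = dd (uhat y)).
  { unfold dd. rewrite (sqnorm_D_diff (uhat y) u0). reflexivity. }
  rewrite A1.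
  assert (A2 : sqnorm p (fun j => matvec p D u0 j - f j) <= / T).
  { eapply Rle_trans. apply sqnorm_le_l1. pose proof l1_f0.
    pose proof (l1_nonneg p (fun j => matvec p D u0 j - f j)).
    assert (/ (4 * (T + 1)) <= / T) by (apply Rinv_le_contravar; lra).
    assert (/ (4 * (T + 1)) <= 1) by (rewrite <- Rinv_1; apply Rinv_le_contravar; lra).
    simpl. nra. }
  assert (A3 : dd (uhat y) <= r0 + lsum (fun u => (if Rlt_dec r0 (dd u) then 9 else 0) * w u y) Snet).
  { destruct (uhat_props y) as [H1 _]. pose proof r0_pos.
    assert (Hnn : forall u, In u Snet -> 0 <= (if Rlt_dec r0 (dd u) then 9 else 0) * w u y).
    { intros. apply Rmult_le_pos. destruct (Rlt_dec r0 (dd u)); lra. apply w_nonneg. }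
    pose proof (lsum_nonneg _ Snet Hnn).
    destruct (Rlt_dec r0 (dd (uhat y))) as [Hlt|Hge].
    - pose proof (lsum_term (fun u => (if Rlt_dec r0 (dd u) then 9 else 0) * w u y) Snet (uhat y) Hnn H1).
      simpl in H2. destruct (Rlt_dec r0 (dd (uhat y))); [|contradiction].
      pose proof (w_uhat_ge1 y Hy). pose proof (dd_le9 (uhat y) H1). lra.
    - lra. }
  unfold Rdiv. lra.
Qed.

Lemma exp_45 : 9 <= exp (4 + / 2).
Proof.
  assert (H1 : 2 <= exp 1) by (pose proof (exp_ineq1 1 ltac:(lra)); lra).
  replace (4 + / 2) with (1 + 1 + 1 + 1 + / 2) by field. rewrite !exp_plus.
  assert (1 <= exp (/ 2)) by (pose proof (exp_ineq1_le (/ 2)); lra).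
  assert (4 <= exp 1 * exp 1) by nra. assert (16 <= exp 1 * exp 1 * exp 1 * exp 1) by nra. nra.
Qed.

Lemma risk_mle : forall N,
  box_expect n N lamf (fun y => sqnorm p (fun j => fhat y j - f j)) <= 2 * r0 + 4 / T.
Proof.
  intros N. destruct Hf as [Hf1 [Hf2 _]].
  assert (Hlam : forall i, (i < n)%nat -> 0 <= lamf i).
  { intros. unfold lamf. apply Rmult_le_pos. lra.
    destruct (A_row_bounds a_l a_u n p At A Hal Hn HAt HA f i H Hf1 Hf2).
    pose proof (INRn_pos n Hn). assert (0 < / (2 * INR n)) by (apply Rinv_0_lt_compat; lra). lra. }
  eapply Rle_trans. apply be_le. exact Hlam. intros y Hy. apply loss_pointwise. apply (box_length n N y Hy).
  rewrite be_plus, be_scal.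
  assert (B1 : box_expect n N lamf (fun _ => 2 * r0 + 2 / T) <= 2 * r0 + 2 / T).
  { apply be_const. auto. pose proof r0_pos. assert (0 < 2 / T) by (apply Rdiv_lt_0_compat; lra). lra. }
  rewrite (be_lsum n N lamf (fun u y => (if Rlt_dec r0 (dd u) then 9 else 0) * w u y) Snet).
  set (Q := 9 * exp (/ 2 - cc * T * (1 - delta) * r0)).
  assert (Hcc : 0 < cc).
  { unfold cc. assert (0 < Kc) by (unfold Kc; lra).
    apply Rinv_0_lt_compat; apply Rmult_lt_0_compat; [lra | apply pow_lt; lra]. }
  assert (Hc : 0 < cc * T * (1 - delta)).
  { apply Rmult_lt_0_compat. apply Rmult_lt_0_compat; lra. lra. }
  assert (B2 : lsum (fun u => box_expect n N lamf (fun y => (if Rlt_dec r0 (dd u) then 9 else 0) * w u y)) Snet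
               <= INR (length Snet) * Q).
  { apply lsum_const_le. intros u Hu. rewrite be_scal.
    assert (Hbw : box_expect n N lamf (w u) <= exp (/ 2 - cc * T * (1 - delta) * dd u)).
    { unfold w. eapply Rle_trans. apply be_w. auto.
      intros. unfold Rdiv. apply Rmult_le_pos. apply sqrt_pos. apply inv_nonneg, sqrt_pos.
      apply exp_mono. apply expo_sum; auto. }
    assert (HQ : 0 < Q) by (unfold Q; pose proof (exp_pos (/ 2 - cc * T * (1 - delta) * r0)); lra).
    destruct (Rlt_dec r0 (dd u)).
    - unfold Q. apply Rmult_le_compat_l. lra. eapply Rle_trans. apply Hbw. apply exp_mono.
      assert (cc * T * (1 - delta) * r0 <= cc * T * (1 - delta) * dd u) by (apply Rmult_le_compat_l; lra). lra.
    - lra. }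
  assert (HS : 0 < INR (length Snet)) by (apply lt_0_INR; pose proof Snet_len_pos; lia).
  assert (B3 : INR (length Snet) * Q <= / T).
  { assert (Hcr : cc * T * (1 - delta) * r0 = ln (INR (length Snet)) + ln T + 5).
    { unfold r0. field. repeat split; lra. }
    assert (E : exp (/ 2 - cc * T * (1 - delta) * r0) = / (exp (4 + / 2) * INR (length Snet) * T)).
    { rewrite Hcr. replace (/ 2 - (ln (INR (length Snet)) + ln T + 5)) with (- ((4 + / 2) + ln (INR (length Snet)) + ln T)) by field.
      rewrite exp_Ropp, !exp_plus, !exp_ln by lra. reflexivity. }
    unfold Q. rewrite E. pose proof exp_45.
    replace (INR (length Snet) * (9 * / (exp (4 + / 2) * INR (length Snet) * T))) with (9 / exp (4 + / 2) * / T)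
      by (field; repeat split; lra).
    assert (9 / exp (4 + / 2) <= 1).
    { apply (Rmult_le_reg_r (exp (4 + / 2))). apply exp_pos. unfold Rdiv. rewrite Rmult_assoc, Rinv_l by lra. lra. }
    assert (0 < / T) by (apply Rinv_0_lt_compat; lra). nra. }
  assert (B4 := B2). unfold Rdiv in *. lra.
Qed.

End Fixf.
Lemma r0_bound : forall NT : nat, INR NT <= T + 1 -> Mn = (4 * p * p * (NT + 1))%nat ->
  (1 <= length Snet)%nat ->
  2 * r0 + 4 / T <= (240 * Kc ^ 2 + 4) *
    (INR s * log2 (INR p) / ((1 - delta) * T) + INR s * log2 (T + 1) / ((1 - delta) * T)).
Proof.
  intros NT HNT HMd HSpos.
  destruct ln2_bounds as [l2a l2b].
  assert (Hp1 : 1 <= INR p) by (apply (le_INR 1); auto).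
  assert (Hs1 : 1 <= INR s) by (apply (le_INR 1); auto).
  set (Lp := ln (INR p)). set (Lt := ln (T + 1)).
  assert (HLp : 0 <= Lp) by (unfold Lp; rewrite <- ln_1; apply ln_le; lra).
  assert (HLt : ln 2 <= Lt) by (unfold Lt; apply ln_le; lra).
  set (X := INR s * (Lp + Lt) / ln 2).
  assert (HX1 : Lt / ln 2 <= X).
  { unfold X. unfold Rdiv. apply Rmult_le_compat_r. left; apply Rinv_0_lt_compat; lra. nra. }
  assert (HLt1 : 1 <= Lt / ln 2).
  { apply (Rmult_le_reg_r (ln 2)). lra. unfold Rdiv. rewrite Rmult_assoc, Rinv_l by lra. lra. }
  assert (HLtl : Lt <= Lt / ln 2).
  { apply (Rmult_le_reg_r (ln 2)). lra. unfold Rdiv. rewrite Rmult_assoc, Rinv_l by lra. nra. }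
  assert (HR : INR s * log2 (INR p) / ((1 - delta) * T) + INR s * log2 (T + 1) / ((1 - delta) * T)
               = X / ((1 - delta) * T)).
  { unfold X, log2, Lp, Lt. field. repeat split; lra. }
  rewrite HR.
  assert (HS0 : 0 < INR (length Snet)) by (apply lt_0_INR; lia).
  assert (HM1 : 1 <= INR Mn) by (apply (le_INR 1); auto).
  assert (HMle : INR Mn <= 4 * INR p * INR p * (T + 2)).
  { rewrite HMd. rewrite !mult_INR, plus_INR. simpl INR. assert (0 <= INR p * INR p) by nra. nra. }
  assert (Hbase : INR p * (2 * INR Mn + 1) <= 24 * INR p ^ 3 * (T + 1)).
  { simpl. assert (2 * INR Mn + 1 <= 24 * INR p * INR p * (T + 1)) by nra. nra. }
  assert (Hlen : INR (length Snet) <= (INR p * (2 * INR Mn + 1)) ^ s).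
  { eapply Rle_trans. apply le_INR. eapply Nat.le_trans. apply filter_length_le.
    unfold netU. rewrite length_map, lists_length. unfold Xg. rewrite length_prod, !length_seq. apply Nat.le_refl.
    rewrite pow_INR, mult_INR, S_INR, mult_INR. simpl INR. right. f_equal. }
  assert (HlnS : ln (INR (length Snet)) <= INR s * (ln 24 + 3 * Lp + Lt)).
  { eapply Rle_trans. apply ln_le. auto. apply Hlen. rewrite ln_pow by nra.
    apply Rmult_le_compat_l. lra. eapply Rle_trans. apply ln_le. nra. apply Hbase.
    rewrite !ln_mult by (repeat apply Rmult_lt_0_compat; try apply pow_lt; lra). rewrite ln_pow by lra. replace (INR 3) with 3 by (simpl; ring). unfold Lp, Lt. lra. }
  assert (H24 : ln 24 <= 5 * ln 2).
  { replace (5 * ln 2) with (INR 5 * ln 2) by (simpl; ring). rewrite <- ln_pow by lra. apply ln_le; simpl; lra. }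
  assert (HlnT : ln T <= Lt) by (unfold Lt; apply ln_le; lra).
  assert (HN0 : ln (INR (length Snet)) + ln T + 5 <= 12 * X).
  { assert (INR s * (ln 24 + 3 * Lp + Lt) <= INR s * (3 * Lp + 6 * Lt)) by (apply Rmult_le_compat_l; lra).
    assert (6 * INR s * (Lp + Lt) <= 6 * X).
    { unfold X. unfold Rdiv. rewrite Rmult_assoc. apply Rmult_le_compat_l. lra.
      assert (0 <= INR s * (Lp + Lt)) by nra.
      assert (1 <= / ln 2) by (rewrite <- Rinv_1; apply Rinv_le_contravar; lra). nra. }
    assert (5 <= 5 * X) by lra. nra. }
  assert (Hcc : 0 < cc).
  { unfold cc. assert (0 < Kc) by (unfold Kc; lra).
    apply Rinv_0_lt_compat; apply Rmult_lt_0_compat; [lra | apply pow_lt; lra]. }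
  assert (Hr0 : r0 <= 12 * X / (cc * T * (1 - delta))).
  { unfold r0. unfold Rdiv. apply Rmult_le_compat_r. left. apply Rinv_0_lt_compat.
    apply Rmult_lt_0_compat. apply Rmult_lt_0_compat; lra. lra. auto. }
  assert (E1 : 12 * X / (cc * T * (1 - delta)) = 120 * Kc ^ 2 * (X / ((1 - delta) * T))).
  { unfold cc. assert (0 < Kc) by (unfold Kc; lra). field. repeat split; try lra. }
  assert (E2 : 4 / T <= 4 * (X / ((1 - delta) * T))).
  { unfold Rdiv. rewrite Rinv_mult. assert (1 <= X * / (1 - delta)).
    { apply (Rmult_le_reg_r (1 - delta)). lra. rewrite Rmult_assoc, Rinv_l by lra. lra. }
    assert (0 < / T) by (apply Rinv_0_lt_compat; lra). nra. }
  lra.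
Qed.

End MLE.


Lemma fold_Rmax_ge : forall l x, In x l -> x <= fold_right Rmax 0 l.
Proof.
  induction l; intros x H. destruct H. simpl. destruct H as [<-|H].
  apply Rmax_l. eapply Rle_trans. apply IHl; auto. apply Rmax_r.
Qed.

Lemma fold_Rmax_nonneg : forall l, 0 <= fold_right Rmax 0 l.
Proof. induction l; simpl. lra. eapply Rle_trans. apply IHl. apply Rmax_r. Qed.

Lemma max_abs2_ge : forall p D j k, (j < p)%nat -> (k < p)%nat -> Rabs (D j k) ^ 2 <= max_abs2 p D.
Proof.
  intros. unfold max_abs2. apply fold_Rmax_ge. apply in_flat_map. exists j. split.
  apply in_seq; lia. apply (in_map (fun k => Rabs (D j k) ^ 2)). apply in_seq; lia.
Qed.

Lemma rsum_shift_seq : forall m F, rsum m (fun i => F (S i)) = fold_right Rplus 0 (map F (seq 1 m)).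
Proof. intros. unfold rsum. rewrite <- seq_shift, map_map. reflexivity. Qed.

Section Unif.
Variables (p s : nat) (D : nat -> nat -> R) (f : nat -> R).
Hypothesis HD : orthonormal p D.
Hypothesis HD0 : first_col_const p D.
Hypothesis Hp : (1 <= p)%nat.
Hypothesis Hf : in_F p s D f.

Definition vres (j : nat) : R := if Nat.eqb j 0 then 0 else coef p D f j.

Lemma unif_repr : forall k, (k < p)%nat -> f k - / INR p = matvec p D vres k.
Proof.
  intros k Hk. rewrite (f_recon p D f HD) by auto.
  assert (Hsp : 0 < sqrt (INR p)) by (apply sqrt_lt_R0, lt_0_INR; lia).
  assert (Hss : sqrt (INR p) * sqrt (INR p) = INR p) by (apply sqrt_sqrt; apply pos_INR).
  assert (E : matvec p D (coef p D f) k - matvec p D vres k = / INR p).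
  { rewrite <- matvec_minus. unfold matvec.
    rewrite (rsum_ext p _ (fun j => (D k j * coef p D f j) * (if Nat.eqb 0 j then 1 else 0))).
    - rewrite rsum_delta by lia. rewrite (coef0 p s D f HD0 Hf), HD0 by auto. rewrite <- Rinv_mult, Hss. reflexivity.
    - intros j Hj. unfold vres. destruct (Nat.eqb_spec 0 j); destruct (Nat.eqb_spec j 0); try lia; subst; ring. }
  lra.
Qed.

Lemma sqnorm_f_le1 : sqnorm p f <= 1.
Proof.
  destruct Hf as [H1 [H2 _]]. unfold sqnorm. rewrite <- H2. apply rsum_le. intros k Hk.
  assert (f k <= rsum p f) by (apply rsum_term_le; auto). pose proof (H1 k Hk). simpl. nra.
Qed.

Lemma coef_sq_le : forall j, (j < p)%nat -> coef p D f j ^ 2 <= max_abs2 p D.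
Proof.
  intros j Hj. destruct Hf as [H1 [H2 _]].
  set (m := max_abs2 p D). assert (Hm : 0 <= m) by apply fold_Rmax_nonneg.
  assert (Habs : Rabs (coef p D f j) <= sqrt m).
  { unfold coef. eapply Rle_trans. apply rsum_abs.
    replace (sqrt m) with (rsum p (fun k => sqrt m * f k)) by (rewrite rsum_scal, H2; ring).
    apply rsum_le. intros k Hk. rewrite Rabs_mult, (Rabs_right (f k)) by (apply Rle_ge; auto).
    apply Rmult_le_compat_r. auto.
    rewrite <- (sqrt_pow2 (Rabs (D k j))) by apply Rabs_pos. apply sqrt_le_1_alt. apply max_abs2_ge; auto. }
  pose proof (Rabs_pos (coef p D f j)). pose proof (sqrt_pos m).
  rewrite <- pow2_abs. replace m with (sqrt m ^ 2) by (simpl; rewrite Rmult_1_r; apply sqrt_sqrt; auto).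
  apply pow_incr; lra.
Qed.

Lemma unif_bound : sqnorm p (fun j => / INR p - f j) <= Rmin (INR s * max_abs2 p D) 1.
Proof.
  assert (E : sqnorm p (fun j => / INR p - f j) = sqnorm p vres).
  { rewrite <- (D_iso p D HD vres). unfold sqnorm. apply rsum_ext. intros. rewrite <- unif_repr by auto.
    simpl. ring. }
  rewrite E. apply Rmin_glb.
  - unfold sqnorm. replace p with (S (p - 1)) at 1 by lia. rewrite rsum_S. unfold vres at 1. simpl Nat.eqb.
    rewrite (rsum_shift_seq (p - 1) (fun j => vres j ^ 2)).
    assert (fold_right Rplus 0 (map (fun j => vres j ^ 2) (seq 1 (p - 1))) <= INR (count_nz 1 (p - 1) (coef p D f)) * max_abs2 p D).
    { apply seq_sum_count.
      - intros i Hi. unfold vres. destruct (Nat.eqb_spec i 0). lia. split. apply pow2_ge_0. apply coef_sq_le. lia.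
      - intros i Hi Hc. unfold vres. destruct (Nat.eqb_spec i 0). lia. rewrite Hc. ring. }
    destruct Hf as [_ [_ H3]]. unfold Dbar_l0 in H3.
    assert (INR (count_nz 1 (p - 1) (coef p D f)) <= INR s) by (apply le_INR; auto).
    pose proof (fold_Rmax_nonneg (flat_map (fun j => map (fun k => Rabs (D j k) ^ 2) (seq 0 p)) (seq 0 p))).
    fold (max_abs2 p D) in H1.
    assert (INR (count_nz 1 (p - 1) (coef p D f)) * max_abs2 p D <= INR s * max_abs2 p D)
      by (apply Rmult_le_compat_r; auto).
    replace (0 ^ 2) with 0 by ring. lra.
  - apply Rle_trans with (sqnorm p (coef p D f)).
    + unfold sqnorm. apply rsum_le. intros i Hi. unfold vres. destruct (Nat.eqb i 0).
      replace (0 ^ 2) with 0 by ring. apply pow2_ge_0. lra.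
    + rewrite <- (D_iso p D HD (coef p D f)).
      replace (sqnorm p (matvec p D (coef p D f))) with (sqnorm p f). apply sqnorm_f_le1.
      unfold sqnorm. apply rsum_ext. intros. rewrite <- (f_recon p D f HD) by auto. reflexivity.
Qed.
End Unif.

Lemma nat_ceil : forall T, 0 < T -> exists NT : nat, T <= INR NT <= T + 1.
Proof.
  intros T HT. destruct (archimed T) as [H1 H2].
  assert (Hz : (0 <= up T)%Z) by (apply le_IZR; lra).
  exists (Z.to_nat (up T)). rewrite INR_IZR_INZ, Z2Nat.id by auto. lra.
Qed.

Lemma ln_1p_lower : forall T, 0 < T -> T / (1 + T) <= ln (1 + T).
Proof.
  intros T HT.
  pose proof (exp_ineq1_le (- (T / (1 + T)))).
  assert (1 + - (T / (1 + T)) = / (1 + T)) by (field; lra).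
  rewrite H0 in H.
  assert (ln (/ (1 + T)) <= - (T / (1 + T))).
  { rewrite <- (ln_exp (- (T / (1 + T)))). apply ln_le. apply Rinv_0_lt_compat; lra. auto. }
  rewrite ln_Rinv in H1 by lra. lra.
Qed.

Lemma R_small_T : forall p s T delta, (1 <= p)%nat -> (1 <= s)%nat -> 0 < T < 1 -> 0 <= delta < 1 ->
  / 2 <= INR s * log2 (INR p) / ((1 - delta) * T) + INR s * log2 (T + 1) / ((1 - delta) * T).
Proof.
  intros p s T delta Hp Hs HT Hd. destruct ln2_bounds as [l2a l2b].
  assert (Hp1 : 1 <= INR p) by (apply (le_INR 1); auto).
  assert (Hs1 : 1 <= INR s) by (apply (le_INR 1); auto).
  assert (HLp : 0 <= log2 (INR p)).
  { unfold log2. apply Rmult_le_pos. rewrite <- ln_1; apply ln_le; lra. left; apply Rinv_0_lt_compat; lra. }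
  assert (Hl : T / 2 <= log2 (T + 1)).
  { pose proof (ln_1p_lower T ltac:(lra)). replace (1 + T) with (T + 1) in H by ring.
    assert (T / 2 <= T / (T + 1)). { unfold Rdiv. apply Rmult_le_compat_l. lra. apply Rinv_le_contravar; lra. }
    unfold log2. assert (0 <= ln (T + 1)) by (rewrite <- ln_1; apply ln_le; lra).
    assert (ln (T + 1) <= ln (T + 1) / ln 2).
    { apply (Rmult_le_reg_r (ln 2)). lra. unfold Rdiv. rewrite Rmult_assoc, Rinv_l by lra. nra. }
    lra. }
  assert (H1 : 0 <= INR s * log2 (INR p) / ((1 - delta) * T)).
  { unfold Rdiv. apply Rmult_le_pos. nra. left. apply Rinv_0_lt_compat. nra. }
  assert (H2 : / 2 <= INR s * log2 (T + 1) / ((1 - delta) * T)).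
  { apply (Rmult_le_reg_r ((1 - delta) * T)). nra. unfold Rdiv. rewrite Rmult_assoc, Rinv_l by nra.
    assert ((1 - delta) * T <= T) by nra. nra. }
  lra.
Qed.

Theorem theorem2 :
  forall a_l a_u : R, a_l < a_u ->
  exists C_U : R, 0 < C_U /\
  forall (n p s : nat) (T delta : R)
         (D : nat -> nat -> R) (At A : nat -> nat -> R),
    (1 <= n)%nat -> (1 <= p)%nat -> (1 <= s)%nat -> 0 < T ->
    orthonormal p D -> first_col_const p D ->
    (* Assumption 1 *)
    (forall i j, (i < n)%nat -> (j < p)%nat ->
        a_l / sqrt (INR n) <= At i j <= a_u / sqrt (INR n)) ->
    (forall i j, (i < n)%nat -> (j < p)%nat ->
        A i j = (At i j + (a_u - 2 * a_l) / sqrt (INR n))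
                / (2 * (a_u - a_l) * sqrt (INR n))) ->
    0 <= delta < 1 ->
    (* Assumption 2 *)
    (forall u : nat -> R, (l0 p u <= 2 * s)%nat ->
        sqnorm n (matvec p At (matvec p D u)) <= (1 + delta) * sqnorm p u) ->
    (* Assumption 3 *)
    (forall u : nat -> R, (l0 p u <= 2 * s)%nat ->
        (1 - delta) * sqnorm p u <= sqnorm n (matvec p At (matvec p D u))) ->
    (* inf over estimators of the sup risk is <= the bound *)
    forall eps : R, 0 < eps ->
    exists fhat : list nat -> (nat -> R),
      forall f : nat -> R, in_F p s D f ->
        expect_le n (fun i => T * matvec p A f i)
          (fun y => sqnorm p (fun j => fhat y j - f j))
          (C_U * Rmin (Rmin
              (INR s * log2 (INR p) / ((1 - delta) * T)
               + INR s * log2 (T + 1) / ((1 - delta) * T))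
              (INR s * max_abs2 p D)) 1 + eps).
Proof.
  intros a_l a_u Hal. exists (240 * (2 * (a_u - a_l)) ^ 2 + 4). split.
  { assert (0 <= (2 * (a_u - a_l)) ^ 2) by apply pow2_ge_0. lra. }
  intros n p s T delta D At A Hn Hp Hs HT HD HD0 HAt HA Hdelta H2 H3 eps Heps.
  set (R0 := INR s * log2 (INR p) / ((1 - delta) * T) + INR s * log2 (T + 1) / ((1 - delta) * T)).
  set (Q := INR s * max_abs2 p D).
  set (CU := 240 * (2 * (a_u - a_l)) ^ 2 + 4).
  assert (HCU : 2 <= CU) by (unfold CU; assert (0 <= (2 * (a_u - a_l)) ^ 2) by apply pow2_ge_0; lra).
  assert (Hlam : forall f, in_F p s D f -> forall i, (i < n)%nat -> 0 <= T * matvec p A f i).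
  { intros f [Hf1 [Hf2 _]] i Hi. apply Rmult_le_pos. lra.
    destruct (A_row_bounds a_l a_u n p At A Hal Hn HAt HA f i Hi Hf1 Hf2).
    pose proof (INRn_pos n Hn). assert (0 < / (2 * INR n)) by (apply Rinv_0_lt_compat; lra). lra. }
  destruct (Rle_lt_dec 1 T) as [HT1|HT1]; [destruct (Rlt_dec R0 (Rmin Q 1)) as [HR|HR]|].
  - (* MLE branch *)
    destruct (nat_ceil T HT) as [NT [HN1 HN2]].
    set (Mn := (4 * p * p * (NT + 1))%nat).
    assert (HM : (1 <= Mn)%nat) by (unfold Mn; nia).
    assert (HMT : INR p * INR p / INR Mn <= / (4 * (T + 1))).
    { unfold Mn. rewrite !mult_INR, plus_INR. simpl INR.
      assert (Hp1 : 1 <= INR p) by (apply (le_INR 1); auto).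
      replace (INR p * INR p / ((1 + 1 + 1 + 1) * INR p * INR p * (INR NT + 1))) with (/ (4 * (INR NT + 1))) by (field; lra).
      apply Rinv_le_contravar; lra. }
    exists (fhat p s T D A Mn). intros f Hf N.
    eapply Rle_trans. apply (risk_mle a_l a_u n p s T delta D At A Mn); auto.
    assert (HS : (1 <= length (Snet p s D Mn))%nat).
    { destruct (Snet p s D Mn) eqn:E. exfalso. exact (Snet_ne p s T D Mn Hp HT1 HD HD0 HM HMT f Hf E). simpl; lia. }
    eapply Rle_trans. apply (r0_bound a_l a_u n p s T delta D Mn Hal Hn Hp Hs HT1 Hdelta HM NT ltac:(lra) eq_refl HS).
    fold R0. unfold Kc. fold CU.
    assert (Rmin (Rmin R0 Q) 1 = R0).
    { assert (R0 < Q) by (pose proof (Rmin_l Q 1); lra). assert (R0 < 1) by (pose proof (Rmin_r Q 1); lra).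
      rewrite (Rmin_left R0 Q) by lra. apply Rmin_left; lra. }
    rewrite H. lra.
  - (* uniform branch, R0 large *)
    exists (fun _ _ => / INR p). intros f Hf N.
    eapply Rle_trans. apply be_const. apply Hlam; auto. apply sqnorm_nonneg.
    eapply Rle_trans. apply (unif_bound p s D f HD HD0 Hp Hf). fold Q.
    assert (Rmin (Rmin R0 Q) 1 = Rmin Q 1).
    { apply Rnot_lt_le in HR. destruct (Rle_dec Q 1) as [hq|hq].
      - rewrite (Rmin_left Q 1) in HR |- * by lra. rewrite (Rmin_right R0 Q) by lra. apply Rmin_left; lra.
      - rewrite (Rmin_right Q 1) in HR |- * by lra. apply Rmin_right. apply Rmin_glb; lra. }
    rewrite H. assert (0 <= Rmin Q 1).
    { apply Rmin_glb. unfold Q. apply Rmult_le_pos. apply pos_INR. apply fold_Rmax_nonneg. lra. }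
    nra.
  - (* uniform branch, small T *)
    exists (fun _ _ => / INR p). intros f Hf N.
    eapply Rle_trans. apply be_const. apply Hlam; auto. apply sqnorm_nonneg.
    eapply Rle_trans. apply (unif_bound p s D f HD HD0 Hp Hf). fold Q.
    assert (HR : / 2 <= R0) by (apply R_small_T; auto).
    assert (HQ0 : 0 <= Q) by (unfold Q; apply Rmult_le_pos; [apply pos_INR | apply fold_Rmax_nonneg]).
    assert (Rmin Q 1 <= 2 * Rmin (Rmin R0 Q) 1).
    { pose proof (Rmin_l Q 1). pose proof (Rmin_r Q 1).
      assert (Rmin Q 1 <= 2 * R0) by lra. assert (Rmin Q 1 <= 2 * Q) by lra. assert (Rmin Q 1 <= 2 * 1) by lra.
      assert (Rmin Q 1 / 2 <= Rmin (Rmin R0 Q) 1) by (apply Rmin_glb; [apply Rmin_glb|]; lra). lra. }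
    assert (0 <= Rmin (Rmin R0 Q) 1).
    { apply Rmin_glb. apply Rmin_glb; lra. lra. }
    nra.
Qed.
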